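(* Let $(\mu,\mathcal{S},L,\pi)$ (continuous time) and $(\mu,\mathcal{S},K,\pi)$ (discrete time) be irreducible, reversible finite Markov chains, $T_2(\mu,\cdot)$ the $L^2$-mixing time, and $\alpha(c)=\sqrt{\tau(c)\lambda_{j(c)}}$. (1) Continuous time: for $0<c<\pi(|\mu/\pi|^2)-1$ and $A>0$, \[\frac{\alpha(c)}{\alpha(c)+A}T_2\Big(\mu,\sqrt{c+\tfrac{A+\alpha(c)}{Ae^{\alpha(c)A}}}\Big)\le\tau(c)\le T_2\Big(\mu,\sqrt{\tfrac{c}{1+c}}\Big),\] and for $0<\epsilon<\sqrt{[\pi(|\mu/\pi-1|^2)\wedge1]/2}$, $\tau(2\epsilon^2)\le T_2(\mu,\epsilon)\le\frac{6}{\epsilon^4}\tau(\epsilon^2/2)$. (2) Discrete time: for $0<c<\pi(|\mu/\pi|^2)-1$ and $A>0$, \[\frac{\alpha(c)}{\alpha(c)+A}\Big(T_2\Big(\mu,\sqrt{c+\tfrac{A+\alpha(c)}{Ae^{\alpha(c)A}}}\Big)-1\Big)\le\tau(c)\le T_2\Big(\mu,\sqrt{\tfrac{c}{1+c}}\Big),\] and for $0<\epsilon<\sqrt{[\pi(|\mu/\pi-1|^2)\wedge1]/2}$, $\tau(2\epsilon^2)\le T_2(\mu,\epsilon)\le\frac{6}{\epsilon^4}\tau(\epsilon^2/2)+1$.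
   Context: $L^2$-distance: continuous time $d_2(\mu,t)=\|\mu e^{tL}/\pi-1\|_{L^2(\pi)}$, discrete time $d_2(\mu,m)=\|\mu K^m/\pi-1\|_{L^2(\pi)}$ ($m$ integer), where $\|f\|_{L^2(\pi)}^2=\sum_y|f(y)|^2\pi(y)$; $T_2(\mu,\epsilon)=\min\{t\ge0:d_2(\mu,t)\le\epsilon\}$ (integer $t$ in discrete time); $\pi(|f|^2)=\sum_y|f(y)|^2\pi(y)$. Continuous time: $0=\lambda_0<\lambda_1\le\dots\le\lambda_{|\mathcal{S}|-1}$ eigenvalues of $-L$ with $L^2(\pi)$-orthonormal right eigenvectors $\phi_0=\mathbf1,\phi_1,\dots$. Discrete time: eigenvalues $\beta_0=1,\beta_1,\dots$ of $K$ with $|\beta_1|\ge|\beta_2|\ge\cdots$, orthonormal eigenvectors $\phi_i$, and $\lambda_i:=-\log|\beta_i|$ ($-\log0=\infty$, $1/\infty=0$). In both cases $\mu(\phi)=\sum_x\mu(x)\phi(x)$, $j(c)=\min\{j\ge1:\sum_{i=1}^j|\mu(\phi_i)|^2>c\}$, $\tau(c)=\max_{j\ge j(c)}\frac{\log(1+\sum_{i=1}^j|\mu(\phi_i)|^2)}{2\lambda_j}$. *)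

(* Defs.v *)
From Stdlib Require Import Reals Lra Arith Factorial ClassicalEpsilon.
Open Scope R_scope.

(* State space S = {0,...,n-1}; vectors are nat -> R, matrices nat -> nat -> R
   (only entries with indices < n matter). *)

Fixpoint rsum (n : nat) (f : nat -> R) : R :=
  match n with O => 0 | S k => rsum k f + f k end.

Definition matmul (n : nat) (A B : nat -> nat -> R) : nat -> nat -> R :=
  fun x y => rsum n (fun z => A x z * B z y).

Fixpoint matpow (n : nat) (A : nat -> nat -> R) (k : nat) : nat -> nat -> R :=
  match k with
  | O => fun x y => if Nat.eqb x y then 1 else 0
  | S k' => matmul n (matpow n A k') A
  end.

Definition is_prob (n : nat) (p : nat -> R) : Prop :=
  (forall x, (x < n)%nat -> 0 <= p x) /\ rsum n p = 1.
Definition is_pos_prob (n : nat) (p : nat -> R) : Prop :=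
  (forall x, (x < n)%nat -> 0 < p x) /\ rsum n p = 1.

Definition is_generator (n : nat) (L : nat -> nat -> R) : Prop :=
  (forall x y, (x < n)%nat -> (y < n)%nat -> x <> y -> 0 <= L x y) /\
  (forall x, (x < n)%nat -> rsum n (L x) = 0).
Definition is_stochastic (n : nat) (K : nat -> nat -> R) : Prop :=
  (forall x y, (x < n)%nat -> (y < n)%nat -> 0 <= K x y) /\
  (forall x, (x < n)%nat -> rsum n (K x) = 1).

Inductive reach (n : nat) (Q : nat -> nat -> R) : nat -> nat -> Prop :=
| reach_refl x : reach n Q x x
| reach_step x z y : (z < n)%nat -> 0 < Q x z -> reach n Q z y -> reach n Q x y.
Definition irreducible (n : nat) (Q : nat -> nat -> R) : Prop :=
  forall x y, (x < n)%nat -> (y < n)%nat -> reach n Q x y.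

Definition reversible (n : nat) (pi : nat -> R) (Q : nat -> nat -> R) : Prop :=
  forall x y, (x < n)%nat -> (y < n)%nat -> pi x * Q x y = pi y * Q y x.

(* matrix exponential e^{tL} = sum_k t^k L^k / k! (the series converges) *)
Definition mexp (n : nat) (L : nat -> nat -> R) (t : R) : nat -> nat -> R :=
  fun x y => epsilon (inhabits 0) (fun l =>
    Un_cv (fun N => sum_f_R0 (fun k => t ^ k / INR (fact k) * matpow n L k x y) N) l).

Definition l2norm (n : nat) (pi : nat -> R) (f : nat -> R) : R :=
  sqrt (rsum n (fun y => (f y) ^ 2 * pi y)).

Definition pisq (n : nat) (pi f : nat -> R) : R := rsum n (fun y => (f y) ^ 2 * pi y).

Definition d2_cont (n : nat) (L : nat -> nat -> R) (pi mu : nat -> R) (t : R) : R :=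
  l2norm n pi (fun y => rsum n (fun x => mu x * mexp n L t x y) / pi y - 1).
Definition d2_disc (n : nat) (K : nat -> nat -> R) (pi mu : nat -> R) (m : nat) : R :=
  l2norm n pi (fun y => rsum n (fun x => mu x * matpow n K m x y) / pi y - 1).

(* extended nonnegative reals (for possibly infinite quantities in discrete time) *)
Inductive ER : Type := Fin (r : R) | PInf.
Definition ERle (a b : ER) : Prop :=
  match a, b with
  | Fin x, Fin y => x <= y
  | _, PInf => True
  | PInf, Fin _ => False
  end.
Definition ermax (a b : ER) : ER :=
  match a, b with Fin x, Fin y => Fin (Rmax x y) | _, _ => PInf end.
(* product with convention 0 * oo = 0 (used for factors >= 0) *)
Definition ermul (a b : ER) : ER :=
  match a, b with
  | Fin x, Fin y => Fin (x * y)
  | Fin x, PInf | PInf, Fin x => if Req_EM_T x 0 then Fin 0 else PInf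
  | PInf, PInf => PInf
  end.
Definition ersqrt (a : ER) : ER := match a with Fin x => Fin (sqrt x) | PInf => PInf end.
Definition eradd (a : ER) (r : R) : ER := match a with Fin x => Fin (x + r) | PInf => PInf end.

Definition T2c (d : R -> R) (eps : R) : R :=
  epsilon (inhabits 0) (fun T =>
    0 <= T /\ d T <= eps /\ forall t, 0 <= t -> d t <= eps -> T <= t).
(* discrete time: integer t, = +oo if the set is empty *)
Definition T2d (d : nat -> R) (eps : R) : ER :=
  epsilon (inhabits PInf) (fun T =>
    match T with
    | Fin t => exists m : nat, t = INR m /\ d m <= eps /\
                 forall k : nat, d k <= eps -> (m <= k)%nat
    | PInf => forall k : nat, eps < d k
    end).

Definition muphi (n : nat) (mu : nat -> R) (phi : nat -> nat -> R) (i : nat) : R :=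
  rsum n (fun x => mu x * phi i x).
(* Ssum j = sum_{i=1}^j |mu(phi_i)|^2 *)
Definition Ssum (n : nat) (mu : nat -> R) (phi : nat -> nat -> R) (j : nat) : R :=
  rsum j (fun i => (muphi n mu phi (S i)) ^ 2).

Fixpoint lfind (P : nat -> bool) (m : nat) : option nat :=
  match m with
  | O => None
  | S k => match lfind P k with
           | Some j => Some j
           | None => if P (S k) then Some (S k) else None
           end
  end.

(* j(c) = min { 1 <= j <= n-1 : Ssum j > c } (default n if no such j) *)
Definition jidx (n : nat) (mu : nat -> R) (phi : nat -> nat -> R) (c : R) : nat :=
  match lfind (fun j => if Rlt_dec c (Ssum n mu phi j) then true else false) (n - 1) with
  | Some j => j
  | None => n
  end.

Fixpoint rmaxr (f : nat -> R) (a k : nat) : R :=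
  match k with O => f a | S k' => Rmax (rmaxr f a k') (f (a + S k')%nat) end.
Fixpoint ermaxr (f : nat -> ER) (a k : nat) : ER :=
  match k with O => f a | S k' => ermax (ermaxr f a k') (f (a + S k')%nat) end.

Definition tau_c (n : nat) (mu : nat -> R) (phi : nat -> nat -> R) (lam : nat -> R) (c : R) : R :=
  let j0 := jidx n mu phi c in
  rmaxr (fun j => ln (1 + Ssum n mu phi j) / (2 * lam j)) j0 (n - 1 - j0).

Definition alpha_c (n : nat) (mu : nat -> R) (phi : nat -> nat -> R) (lam : nat -> R) (c : R) : R :=
  sqrt (tau_c n mu phi lam c * lam (jidx n mu phi c)).

(* discrete time: lambda_i = - log |beta_i|, with -log 0 = +oo *)
Definition lam_d (beta : nat -> R) (i : nat) : ER :=
  if Req_EM_T (beta i) 0 then PInf else Fin (- ln (Rabs (beta i))).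

(* x / (2 l) with 1/oo = 0 and x/0 = +oo (x > 0 in the relevant range) *)
Definition erterm (x : R) (l : ER) : ER :=
  match l with
  | PInf => Fin 0
  | Fin y => if Req_EM_T y 0 then PInf else Fin (x / (2 * y))
  end.

Definition tau_d (n : nat) (mu : nat -> R) (phi : nat -> nat -> R) (beta : nat -> R) (c : R) : ER :=
  let j0 := jidx n mu phi c in
  ermaxr (fun j => erterm (ln (1 + Ssum n mu phi j)) (lam_d beta j)) j0 (n - 1 - j0).

Definition alpha_d (n : nat) (mu : nat -> R) (phi : nat -> nat -> R) (beta : nat -> R) (c : R) : ER :=
  ersqrt (ermul (tau_d n mu phi beta c) (lam_d beta (jidx n mu phi c))).

(* alpha/(alpha+A) and sqrt(c + (A+alpha)/(A e^{alpha A})), extended by their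
   limits at alpha = +oo *)
Definition coefE (A : R) (al : ER) : R :=
  match al with Fin a => a / (a + A) | PInf => 1 end.
Definition epsargE (c A : R) (al : ER) : R :=
  match al with Fin a => sqrt (c + (A + a) / (A * exp (a * A))) | PInf => sqrt c end.

Definition eigen_c (n : nat) (L : nat -> nat -> R) (pi : nat -> R)
  (lam : nat -> R) (phi : nat -> nat -> R) : Prop :=
  (forall i x, (i < n)%nat -> (x < n)%nat ->
     rsum n (fun y => L x y * phi i y) = - lam i * phi i x) /\
  (forall i k, (i < n)%nat -> (k < n)%nat ->
     rsum n (fun x => phi i x * phi k x * pi x) = if Nat.eqb i k then 1 else 0) /\
  lam 0%nat = 0 /\ (forall x, (x < n)%nat -> phi 0%nat x = 1) /\
  ((1 < n)%nat -> 0 < lam 1%nat) /\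
  (forall i, (1 <= i)%nat -> (S i < n)%nat -> lam i <= lam (S i)).

Definition eigen_d (n : nat) (K : nat -> nat -> R) (pi : nat -> R)
  (beta : nat -> R) (phi : nat -> nat -> R) : Prop :=
  (forall i x, (i < n)%nat -> (x < n)%nat ->
     rsum n (fun y => K x y * phi i y) = beta i * phi i x) /\
  (forall i k, (i < n)%nat -> (k < n)%nat ->
     rsum n (fun x => phi i x * phi k x * pi x) = if Nat.eqb i k then 1 else 0) /\
  beta 0%nat = 1 /\ (forall x, (x < n)%nat -> phi 0%nat x = 1) /\
  (forall i, (1 <= i)%nat -> (S i < n)%nat -> Rabs (beta (S i)) <= Rabs (beta i)).

(* Main.v *)
Require Import Defs.
From Stdlib Require Import Reals Lra Lia Psatz ClassicalEpsilon Classical FunctionalExtensionality Factorial ZArith.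
From Coquelicot Require Coquelicot.
Open Scope R_scope.

Lemma rsum_ext n f g : (forall i, (i < n)%nat -> f i = g i) -> rsum n f = rsum n g.
Proof. induction n; simpl; intros H; auto. rewrite IHn by (intros; apply H; lia). rewrite H by lia; auto. Qed.

Lemma rsum_add n f g : rsum n (fun i => f i + g i) = rsum n f + rsum n g.
Proof. induction n; simpl; [lra|]. rewrite IHn; lra. Qed.

Lemma rsum_scal n c f : rsum n (fun i => c * f i) = c * rsum n f.
Proof. induction n; simpl; [lra|]. rewrite IHn; lra. Qed.

Lemma rsum_scal_r n c f : rsum n (fun i => f i * c) = rsum n f * c.
Proof. induction n; simpl; [lra|]. rewrite IHn; lra. Qed.

Lemma rsum_opp n f : rsum n (fun i => - f i) = - rsum n f.
Proof. induction n; simpl; [lra|]. rewrite IHn; lra. Qed.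

Lemma rsum_sub n f g : rsum n (fun i => f i - g i) = rsum n f - rsum n g.
Proof. induction n; simpl; [lra|]. rewrite IHn; lra. Qed.

Lemma rsum_const n c : rsum n (fun _ => c) = INR n * c.
Proof. induction n; simpl; [lra|]. rewrite IHn. destruct n; simpl; lra. Qed.

Lemma rsum_swap n m (f : nat -> nat -> R) :
  rsum n (fun i => rsum m (fun j => f i j)) = rsum m (fun j => rsum n (fun i => f i j)).
Proof.
  induction n; simpl.
  - induction m; simpl; auto. rewrite <- IHm; lra.
  - rewrite IHn. rewrite <- rsum_add. auto.
Qed.

Lemma rsum_le n f g : (forall i, (i < n)%nat -> f i <= g i) -> rsum n f <= rsum n g.
Proof. induction n; simpl; intros H; [lra|]. specialize (IHn (fun i Hi => H i ltac:(lia))). specialize (H n ltac:(lia)). lra. Qed.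

Lemma rsum_nonneg n f : (forall i, (i < n)%nat -> 0 <= f i) -> 0 <= rsum n f.
Proof. intros H. replace 0 with (rsum n (fun _ => 0)). apply rsum_le; auto. rewrite rsum_const; lra. Qed.

Lemma rsum_lt n f g : (forall i, (i < n)%nat -> f i <= g i) ->
  (exists i, (i < n)%nat /\ f i < g i) -> rsum n f < rsum n g.
Proof.
  induction n; simpl; intros H [i [Hi Hlt]]; [lia|].
  destruct (Nat.eq_dec i n).
  - subst. pose proof (rsum_le n f g (fun j Hj => H j ltac:(lia))). lra.
  - assert (rsum n f < rsum n g) by (apply IHn; [intros; apply H; lia| exists i; split; auto; lia]).
    specialize (H n ltac:(lia)). lra.
Qed.

Lemma rsum_delta n f y : (y < n)%nat ->
  rsum n (fun z => f z * (if Nat.eqb z y then 1 else 0)) = f y.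
Proof.
  induction n; simpl; intros Hy; [lia|].
  destruct (Nat.eq_dec y n).
  - subst. rewrite Nat.eqb_refl.
    rewrite (rsum_ext _ _ (fun _ => 0)). rewrite rsum_const; lra.
    intros i Hi. destruct (Nat.eqb_spec i n); [lia|lra].
  - rewrite IHn by lia. destruct (Nat.eqb_spec n y); [lia|lra].
Qed.

Lemma rsum_delta_l n f y : (y < n)%nat ->
  rsum n (fun z => (if Nat.eqb y z then 1 else 0) * f z) = f y.
Proof.
  intros Hy. rewrite <- (rsum_delta n f y Hy). apply rsum_ext. intros i _.
  rewrite Nat.eqb_sym. lra.
Qed.

Lemma rsum_zero_each n f : (forall i, (i < n)%nat -> 0 <= f i) -> rsum n f = 0 ->
  forall i, (i < n)%nat -> f i = 0.
Proof.
  induction n; simpl; intros H0 Hs i Hi; [lia|].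
  pose proof (rsum_nonneg n f (fun j Hj => H0 j ltac:(lia))).
  pose proof (H0 n ltac:(lia)).
  destruct (Nat.eq_dec i n). subst; lra.
  apply IHn; [intros; apply H0; lia| lra | lia].
Qed.

Lemma rsum_first n f : rsum (S n) f = f 0%nat + rsum n (fun i => f (S i)).
Proof. induction n; simpl in *; [lra|]. rewrite IHn. lra. Qed.

Lemma rsum_app a b f : rsum (a + b) f = rsum a f + rsum b (fun i => f (a + i)%nat).
Proof. induction b; simpl. rewrite Nat.add_0_r; lra. rewrite Nat.add_succ_r. simpl. rewrite IHb. lra. Qed.

Lemma rsum_mul_distr n m f g :
  rsum n f * rsum m g = rsum n (fun i => rsum m (fun j => f i * g j)).
Proof.
  rewrite <- rsum_scal_r. apply rsum_ext; intros. rewrite <- rsum_scal. auto.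
Qed.

Definition delta (x y : nat) : R := if Nat.eqb x y then 1 else 0.

Section Compl.
Variable n : nat.
Variable pi : nat -> R.
Variable phi : nat -> nat -> R.
Hypothesis pipos : forall x, (x < n)%nat -> 0 < pi x.
Hypothesis orth : forall i k, (i < n)%nat -> (k < n)%nat ->
     rsum n (fun x => phi i x * phi k x * pi x) = if Nat.eqb i k then 1 else 0.

Let K x y := rsum n (fun i => phi i x * phi i y).

Lemma Ksym x y : K x y = K y x.
Proof. unfold K. apply rsum_ext; intros; lra. Qed.

Lemma Kid x z : rsum n (fun y => K x y * K y z * pi y) = K x z.
Proof.
  transitivity (rsum n (fun y => rsum n (fun i => rsum n (fun k =>
     (phi i x * phi k z) * (phi i y * phi k y * pi y))))).
  { apply rsum_ext; intros y _. unfold K. rewrite rsum_mul_distr. rewrite <- rsum_scal_r.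
    apply rsum_ext; intros i _. rewrite <- rsum_scal_r. apply rsum_ext; intros k _. lra. }
  rewrite rsum_swap.
  transitivity (rsum n (fun i => rsum n (fun k => (phi i x * phi k z) * (if Nat.eqb i k then 1 else 0)))).
  { apply rsum_ext; intros i Hi. rewrite rsum_swap. apply rsum_ext; intros k Hk.
    rewrite rsum_scal. rewrite orth; auto. }
  unfold K. apply rsum_ext; intros i Hi.
  rewrite (rsum_ext _ _ (fun k => (phi i x * phi k z) * (if Nat.eqb k i then 1 else 0))).
  - rewrite rsum_delta; auto.
  - intros; rewrite Nat.eqb_sym; auto.
Qed.

Let E x := rsum n (fun y => (delta x y - K x y * pi y) ^ 2 / pi y).

Lemma E_eq x : (x < n)%nat -> E x = / pi x - K x x.
Proof.
  intros Hx. unfold E.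
  transitivity (rsum n (fun y => (/ pi y - 2 * K x y) * (if Nat.eqb y x then 1 else 0)
                          + K x y * K y x * pi y)).
  { apply rsum_ext; intros y Hy. rewrite (Ksym y x). unfold delta.
    specialize (pipos y Hy).
    rewrite Nat.eqb_sym. destruct (Nat.eqb y x); field; lra. }
  rewrite rsum_add. rewrite rsum_delta by auto. rewrite Kid. lra.
Qed.

Lemma E_tot : rsum n (fun x => pi x * E x) = 0.
Proof.
  rewrite (rsum_ext _ _ (fun x => 1 - rsum n (fun i => phi i x * phi i x * pi x))).
  - rewrite rsum_sub. rewrite rsum_const. rewrite rsum_swap.
    rewrite (rsum_ext _ (fun i => rsum n (fun x => phi i x * phi i x * pi x)) (fun _ => 1)).
    + rewrite rsum_const; lra.
    + intros i Hi. rewrite orth by auto. rewrite Nat.eqb_refl; auto.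
  - intros x Hx. rewrite E_eq by auto. unfold K.
    specialize (pipos x Hx). rewrite Rmult_minus_distr_l. rewrite Rinv_r by lra.
    f_equal. rewrite <- rsum_scal. apply rsum_ext; intros; lra.
Qed.

Lemma complete x y : (x < n)%nat -> (y < n)%nat ->
  rsum n (fun i => phi i x * phi i y * pi y) = if Nat.eqb x y then 1 else 0.
Proof.
  intros Hx Hy.
  assert (HE : forall x, (x < n)%nat -> 0 <= E x).
  { intros x0 Hx0. unfold E. apply rsum_nonneg. intros y0 Hy0. specialize (pipos y0 Hy0).
    apply Rmult_le_pos. apply pow2_ge_0. left; apply Rinv_0_lt_compat; lra. }
  pose proof (rsum_zero_each n (fun x => pi x * E x)
      (fun x Hx => Rmult_le_pos _ _ (Rlt_le _ _ (pipos x Hx)) (HE x Hx)) E_tot x Hx) as H1.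
  simpl in H1. assert (E x = 0).
  { specialize (pipos x Hx). destruct (Rmult_integral _ _ H1); lra. }
  assert (Hterm := rsum_zero_each n (fun y => (delta x y - K x y * pi y) ^ 2 / pi y)).
  specialize (Hterm (fun y0 Hy0 => Rmult_le_pos _ _ (pow2_ge_0 _) (Rlt_le _ _ (Rinv_0_lt_compat _ (pipos y0 Hy0)))) H y Hy).
  simpl in Hterm. specialize (pipos y Hy).
  assert ((delta x y - K x y * pi y) ^ 2 = 0).
  { destruct (Rmult_integral _ _ Hterm) as [h|h]; auto.
    pose proof (Rinv_0_lt_compat _ pipos); lra. }
  assert (delta x y - K x y * pi y = 0) by nra.
  unfold delta, K in *. rewrite rsum_scal_r. lra.
Qed.
End Compl.

Section Spec.
Variable n : nat.
Variable pi : nat -> R.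
Variable phi : nat -> nat -> R.
Hypothesis pipos : forall x, (x < n)%nat -> 0 < pi x.
Hypothesis orth : forall i k, (i < n)%nat -> (k < n)%nat ->
     rsum n (fun x => phi i x * phi k x * pi x) = if Nat.eqb i k then 1 else 0.

Lemma matpow_eig Q ev : (forall i x, (i < n)%nat -> (x < n)%nat ->
     rsum n (fun y => Q x y * phi i y) = ev i * phi i x) ->
  forall k i x, (i < n)%nat -> (x < n)%nat ->
  rsum n (fun y => matpow n Q k x y * phi i y) = ev i ^ k * phi i x.
Proof.
  intros Hev k. induction k; intros i x Hi Hx; simpl.
  - rewrite rsum_delta_l by auto. lra.
  - unfold matmul.
    transitivity (rsum n (fun y => rsum n (fun z => matpow n Q k x z * (Q z y * phi i y)))).
    { apply rsum_ext; intros. rewrite <- rsum_scal_r. apply rsum_ext; intros; lra. }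
    rewrite rsum_swap.
    transitivity (rsum n (fun z => matpow n Q k x z * phi i z * ev i)).
    { apply rsum_ext; intros z Hz. rewrite rsum_scal. rewrite Hev by auto. lra. }
    rewrite rsum_scal_r. rewrite IHk by auto. lra.
Qed.

Lemma matpow_spec Q ev : (forall i x, (i < n)%nat -> (x < n)%nat ->
     rsum n (fun y => Q x y * phi i y) = ev i * phi i x) ->
  forall k x y, (x < n)%nat -> (y < n)%nat ->
  matpow n Q k x y = rsum n (fun i => ev i ^ k * phi i x * phi i y * pi y).
Proof.
  intros Hev k x y Hx Hy.
  rewrite <- (rsum_delta n (fun z => matpow n Q k x z) y Hy).
  transitivity (rsum n (fun z => matpow n Q k x z * rsum n (fun i => phi i z * phi i y * pi y))).
  { apply rsum_ext; intros z Hz. rewrite complete; auto. }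
  transitivity (rsum n (fun z => rsum n (fun i => (matpow n Q k x z * phi i z) * (phi i y * pi y)))).
  { apply rsum_ext; intros z Hz. rewrite <- rsum_scal. apply rsum_ext; intros; lra. }
  rewrite rsum_swap. apply rsum_ext; intros i Hi.
  rewrite rsum_scal_r. rewrite (matpow_eig Q ev Hev) by auto. lra.
Qed.

Lemma Un_cv_const c : Un_cv (fun _ => c) c.
Proof. intros e He. exists 0%nat. intros. unfold R_dist. rewrite Rminus_diag, Rabs_R0. auto. Qed.

Lemma Un_cv_ext u v l : (forall N, u N = v N) -> Un_cv u l -> Un_cv v l.
Proof. intros H Hu e He. destruct (Hu e He) as [N HN]. exists N. intros. rewrite <- H. auto. Qed.

Lemma Un_cv_rsum m (u : nat -> nat -> R) (l : nat -> R) :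
  (forall i, (i < m)%nat -> Un_cv (u i) (l i)) ->
  Un_cv (fun N => rsum m (fun i => u i N)) (rsum m l).
Proof.
  induction m; intros H; simpl.
  - apply Un_cv_const.
  - apply CV_plus. apply IHm; intros; apply H; lia. apply H; lia.
Qed.

Lemma sum_rsum_swap m (g : nat -> nat -> R) N :
  sum_f_R0 (fun k => rsum m (fun i => g i k)) N = rsum m (fun i => sum_f_R0 (g i) N).
Proof.
  induction N; simpl; auto. rewrite IHN. rewrite <- rsum_add. auto.
Qed.

Lemma mexp_spec L lam : (forall i x, (i < n)%nat -> (x < n)%nat ->
     rsum n (fun y => L x y * phi i y) = - lam i * phi i x) ->
  forall t x y, (x < n)%nat -> (y < n)%nat ->
  mexp n L t x y = rsum n (fun i => exp (- lam i * t) * phi i x * phi i y * pi y).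
Proof.
  intros Hev t x y Hx Hy.
  replace (rsum n (fun i => exp (- lam i * t) * phi i x * phi i y * pi y)) with
    (rsum n (fun i => (phi i x * phi i y * pi y) * exp (- lam i * t))) by (apply rsum_ext; intros; ring).
  set (l := rsum n (fun i => (phi i x * phi i y * pi y) * exp (- lam i * t))).
  assert (HC : Un_cv (fun N => sum_f_R0 (fun k => t ^ k / INR (fact k) * matpow n L k x y) N) l).
  { eapply Un_cv_ext.
    2:{ apply (Un_cv_rsum n (fun i N => (phi i x * phi i y * pi y) *
            sum_f_R0 (fun k => / INR (fact k) * (- lam i * t) ^ k) N)
            (fun i => (phi i x * phi i y * pi y) * exp (- lam i * t))).
        intros i Hi.
        eapply Un_cv_ext.
        2:{ apply CV_mult. apply Un_cv_const. exact (proj2_sig (exist_exp (- lam i * t))). }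
        intros N. reflexivity. }
    intros N. simpl.
    rewrite (rsum_ext n _ (fun i => sum_f_R0 (fun k => (phi i x * phi i y * pi y) * (/ INR (fact k) * (- lam i * t) ^ k)) N)).
    2:{ intros i _. rewrite scal_sum. apply sum_eq; intros; ring. }
    rewrite <- sum_rsum_swap. apply sum_eq. intros k _.
    rewrite (matpow_spec L (fun i => - lam i) Hev k x y Hx Hy).
    rewrite <- rsum_scal. apply rsum_ext. intros i _. rewrite Rpow_mult_distr.
    unfold Rdiv. ring. }
  unfold mexp.
  assert (HE := epsilon_spec (inhabits 0) (fun l0 => Un_cv
     (fun N => sum_f_R0 (fun k => t ^ k / INR (fact k) * matpow n L k x y) N) l0) (ex_intro _ l HC)).
  eapply UL_sequence. exact HE. exact HC.
Qed.

Lemma parseval m B : (m < n)%nat ->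
  rsum n (fun y => (rsum m (fun i => B i * phi (S i) y)) ^ 2 * pi y) = rsum m (fun i => B i ^ 2).
Proof.
  intros Hm.
  transitivity (rsum n (fun y => rsum m (fun i => rsum m (fun k => (B i * B k) *
        (phi (S i) y * phi (S k) y * pi y))))).
  { apply rsum_ext; intros y _. rewrite <- Rsqr_pow2. unfold Rsqr. rewrite rsum_mul_distr.
    rewrite <- rsum_scal_r. apply rsum_ext; intros i _. rewrite <- rsum_scal_r.
    apply rsum_ext; intros; ring. }
  rewrite rsum_swap. apply rsum_ext; intros i Hi.
  rewrite rsum_swap.
  rewrite (rsum_ext _ _ (fun k => (B k * B i) * (if Nat.eqb k i then 1 else 0))).
  - rewrite rsum_delta by auto. ring.
  - intros k Hk. rewrite rsum_scal. rewrite orth by lia. simpl.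
    rewrite (Nat.eqb_sym k i). ring.
Qed.

Variable mu : nat -> R.
Hypothesis musum : rsum n mu = 1.
Hypothesis phi0 : forall x, (x < n)%nat -> phi 0%nat x = 1.
Hypothesis npos : (1 <= n)%nat.

Lemma muphi0 : muphi n mu phi 0 = 1.
Proof. unfold muphi. rewrite <- musum. apply rsum_ext; intros. rewrite phi0; auto; ring. Qed.

Lemma dist_spec (g : nat -> R) (M : nat -> nat -> R) : g 0%nat = 1 ->
  (forall x y, (x < n)%nat -> (y < n)%nat -> M x y = rsum n (fun i => g i * phi i x * phi i y * pi y)) ->
  pisq n pi (fun y => rsum n (fun x => mu x * M x y) / pi y - 1)
   = rsum (n - 1) (fun i => (g (S i) * muphi n mu phi (S i)) ^ 2).
Proof.
  intros g0 HM. unfold pisq.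
  rewrite <- (parseval (n - 1) (fun i => g (S i) * muphi n mu phi (S i))) by lia.
  apply rsum_ext; intros y Hy. f_equal. f_equal.
  transitivity (rsum n (fun i => g i * muphi n mu phi i * phi i y) - 1).
  { f_equal. unfold muphi.
    transitivity (rsum n (fun x => rsum n (fun i => (g i * phi i y) * (mu x * phi i x)))).
    { unfold Rdiv. rewrite <- rsum_scal_r. apply rsum_ext; intros x Hx. rewrite HM by auto.
      rewrite <- rsum_scal. rewrite <- rsum_scal_r. apply rsum_ext; intros i _.
      specialize (pipos y Hy). field. lra. }
    rewrite rsum_swap. apply rsum_ext; intros i _. rewrite rsum_scal. ring. }
  pose proof muphi0 as Hm0. pose proof (phi0 y Hy) as Hp0.
  replace n with (S (n - 1)) at 1 by lia. rewrite rsum_first. rewrite g0, Hm0, Hp0. ring.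
Qed.

Lemma pisq_mu : pisq n pi (fun x => mu x / pi x - 1) = Ssum n mu phi (n - 1).
Proof.
  unfold Ssum. transitivity (rsum (n-1) (fun i => (1 * muphi n mu phi (S i)) ^ 2)).
  2:{ apply rsum_ext; intros; f_equal; ring. }
  rewrite <- (dist_spec (fun _ => 1) (fun x y => if Nat.eqb x y then 1 else 0)); auto.
  - unfold pisq. apply rsum_ext; intros y Hy. rewrite (rsum_delta n mu y Hy). reflexivity.
  - intros x y Hx Hy. rewrite <- (complete n pi phi pipos orth x y Hx Hy). apply rsum_ext; intros; ring.
Qed.

Lemma pisq_mu2 : rsum n pi = 1 -> pisq n pi (fun x => mu x / pi x) - 1 = pisq n pi (fun x => mu x / pi x - 1).
Proof.
  intros pis. unfold pisq.
  rewrite (rsum_ext n (fun y => (mu y / pi y - 1) ^ 2 * pi y)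
     (fun y => (mu y / pi y) ^ 2 * pi y - 2 * mu y + pi y)).
  - rewrite rsum_add, rsum_sub, rsum_scal. rewrite musum, pis. lra.
  - intros y Hy. specialize (pipos y Hy). field. lra.
Qed.
End Spec.

Lemma exp_le x y : x <= y -> exp x <= exp y.
Proof. intros [H|H]; [left; apply exp_increasing; auto| subst; lra]. Qed.

Module BernM.
Import Coquelicot.Coquelicot.
Lemma bern d s t : 0 <= d -> 0 < s -> s <= t ->
  s * (1 - exp (- (d * t))) <= t * (1 - exp (- (d * s))).
Proof.
  intros Hd Hs Hst.
  destruct (Req_dec s t) as [<-|Hne]; [lra|].
  set (h := fun x => x * (1 - exp (- (d * s))) - s * (1 - exp (- (d * x)))).
  assert (Hder : forall c, s <= c <= t -> derivable_pt_lim h c ((1 - exp (- (d * s))) - s * (d * exp (- (d * c))))).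
  { intros c Hc. apply is_derive_Reals. unfold h. auto_derive; auto. ring. }
  destruct (MVT_cor2 h _ s t ltac:(lra) Hder) as [c [Hc1 Hc2]].
  assert (0 <= (1 - exp (- (d * s))) - s * (d * exp (- (d * c)))).
  { assert (exp (- (d * c)) <= exp (- (d * s))) by (apply exp_le; nra).
    assert (H1 := exp_ineq1_le (d * s)).
    assert (H2 : exp (- (d * s)) * exp (d * s) = 1) by (rewrite <- exp_plus; replace (- (d * s) + d * s) with 0 by ring; apply exp_0).
    assert (0 < exp (- (d * s))) by apply exp_pos.
    assert (s * d * exp (- (d * c)) <= s * d * exp (- (d * s))) by (apply Rmult_le_compat_l; nra).
    assert (0 <= exp (- (d * s)) * (exp (d * s) - 1 - d * s)) by (apply Rmult_le_pos; lra).
    nra. }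
  assert (0 <= ((1 - exp (- (d * s))) - s * (d * exp (- (d * c)))) * (t - s)) by (apply Rmult_le_pos; lra).
  unfold h in Hc1. lra.
Qed.
End BernM.
Definition bern := BernM.bern.

Lemma key_step (P x y tau t : R) : 0 <= tau -> tau < t -> x <= y -> 0 <= P -> P <= exp (x * tau) ->
  P * exp (- x * t) <= t / (t - tau) * (exp (- x * (t - tau)) - exp (- y * (t - tau))) + P * exp (- y * t).
Proof.
  intros Htau Ht Hxy HP HPe. set (s := t - tau). set (d := y - x).
  assert (Hs : 0 < s) by (unfold s; lra).
  assert (E1 : exp (x * tau) * exp (- x * t) = exp (- x * s)) by (rewrite <- exp_plus; f_equal; unfold s; ring).
  assert (E2 : exp (x * tau) * exp (- y * t) = exp (- x * s) * exp (- (d * t))) by (rewrite <- !exp_plus; f_equal; unfold s, d; ring).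
  assert (E3 : exp (- y * s) = exp (- x * s) * exp (- (d * s))) by (rewrite <- !exp_plus; f_equal; unfold d; ring).
  assert (Hdiff : exp (- y * t) <= exp (- x * t)) by (apply exp_le; nra).
  assert (H1 : P * (exp (- x * t) - exp (- y * t)) <= exp (x * tau) * (exp (- x * t) - exp (- y * t)))
    by (apply Rmult_le_compat_r; lra).
  assert (HB := bern d s t ltac:(unfold d; lra) Hs ltac:(unfold s; lra)).
  assert (HB' : 1 - exp (- (d * t)) <= t / s * (1 - exp (- (d * s)))).
  { apply Rmult_le_reg_l with s; auto. unfold Rdiv. replace (s * (t * / s * (1 - exp (- (d * s))))) with (t * (1 - exp (- (d * s)))) by (field; lra). lra. }
  assert (Hpos := exp_pos (- x * s)).
  assert (H3 : exp (- x * s) * (1 - exp (- (d * t))) <= exp (- x * s) * (t / s * (1 - exp (- (d * s)))))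
    by (apply Rmult_le_compat_l; lra).
  rewrite E3. fold s.
  assert (exp (x * tau) * (exp (- x * t) - exp (- y * t)) = exp (- x * s) * (1 - exp (- (d * t)))).
  { rewrite Rmult_minus_distr_l, E1, E2. ring. }
  nra.
Qed.

Lemma key_inv (u q : nat -> R) (Q tau t : R) m :
  0 <= tau -> tau < t -> 0 <= Q -> (forall k, (k <= m)%nat -> 0 <= q k) ->
  (forall k, (k < m)%nat -> u k <= u (S k)) ->
  (forall k, (k <= m)%nat -> Q + rsum (S k) q <= exp (u k * tau)) ->
  rsum (S m) (fun k => q k * exp (- u k * t)) <=
   t / (t - tau) * (exp (- u 0%nat * (t - tau)) - exp (- u m * (t - tau))) + (Q + rsum (S m) q) * exp (- u m * t).
Proof.
  intros Htau Ht HQ Hq Hu HP. induction m.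
  - simpl. specialize (Hq 0%nat (le_n _)). assert (0 < exp (- u 0%nat * t)) by apply exp_pos.
    rewrite Rminus_diag, Rmult_0_r. nra.
  - assert (IH := IHm (fun k Hk => Hq k ltac:(lia)) (fun k Hk => Hu k ltac:(lia)) (fun k Hk => HP k ltac:(lia))).
    change (rsum (S (S m)) (fun k => q k * exp (- u k * t))) with
       (rsum (S m) (fun k => q k * exp (- u k * t)) + q (S m) * exp (- u (S m) * t)).
    change (rsum (S (S m)) q) with (rsum (S m) q + q (S m)).
    assert (Hnn : 0 <= Q + rsum (S m) q) by (pose proof (rsum_nonneg (S m) q (fun k Hk => Hq k ltac:(lia))); lra).
    assert (Hst := key_step (Q + rsum (S m) q) (u m) (u (S m)) tau t Htau Ht (Hu m ltac:(lia)) Hnn (HP m ltac:(lia))).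
    lra.
Qed.

Lemma key_abs (u q : nat -> R) (Q tau t : R) m :
  0 <= tau -> tau < t -> 0 <= Q -> (forall k, (k <= m)%nat -> 0 <= q k) ->
  (forall k, (k < m)%nat -> u k <= u (S k)) ->
  (forall k, (k <= m)%nat -> Q + rsum (S k) q <= exp (u k * tau)) ->
  rsum (S m) (fun k => q k * exp (- u k * t)) <= t / (t - tau) * exp (- u 0%nat * (t - tau)).
Proof.
  intros Htau Ht HQ Hq Hu HP.
  assert (H := key_inv u q Q tau t m Htau Ht HQ Hq Hu HP).
  assert (Hr : 1 <= t / (t - tau)) by (apply Rmult_le_reg_r with (t - tau); [lra|]; unfold Rdiv; rewrite Rmult_assoc, Rinv_l by lra; lra).
  assert (E : exp (u m * tau) * exp (- u m * t) = exp (- u m * (t - tau))) by (rewrite <- exp_plus; f_equal; ring).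
  assert (H2 : (Q + rsum (S m) q) * exp (- u m * t) <= exp (u m * tau) * exp (- u m * t))
    by (apply Rmult_le_compat_r; [left; apply exp_pos| apply HP; lia]).
  assert (0 < exp (- u m * (t - tau))) by apply exp_pos.
  nra.
Qed.

Lemma chain_mono (f : nat -> R) N : (forall j, (1 <= j)%nat -> (S j <= N)%nat -> f j <= f (S j)) ->
  forall i j, (1 <= i)%nat -> (i <= j)%nat -> (j <= N)%nat -> f i <= f j.
Proof.
  intros H i j Hi Hij HjN. induction j.
  - lia.
  - destruct (Nat.eq_dec i (S j)). subst; lra.
    assert (f i <= f j) by (apply IHj; lia). specialize (H j ltac:(lia) HjN). lra.
Qed.

Lemma rsum_prefix_le N j f : (j <= N)%nat -> (forall i, (i < N)%nat -> 0 <= f i) -> rsum j f <= rsum N f.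
Proof.
  intros Hj Hf. replace N with (j + (N - j))%nat by lia. rewrite rsum_app.
  assert (0 <= rsum (N - j) (fun i => f (j + i)%nat)) by (apply rsum_nonneg; intros; apply Hf; lia). lra.
Qed.

Lemma ln_le_exp x y : 0 < x -> ln x <= y -> x <= exp y.
Proof. intros Hx H. rewrite <- (exp_ln x Hx). apply exp_le; auto. Qed.

Section Abs.
Variable N : nat.
Variable w : nat -> R.
Variable lam : nat -> R.
Hypothesis wpos : forall i, (i < N)%nat -> 0 <= w i.
Hypothesis lammono : forall j, (1 <= j)%nat -> (S j <= N)%nat -> lam j <= lam (S j).

Definition Dc t := rsum N (fun i => w i * exp (- (2 * lam (S i)) * t)).

Lemma contB j0 c tau t :
  (forall j, (1 <= j <= N)%nat -> 0 <= lam j) ->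
  (forall j, (j0 <= j <= N)%nat -> 0 < lam j) ->
  (1 <= j0 <= N)%nat -> rsum (j0 - 1) w <= c ->
  (forall j, (j0 <= j <= N)%nat -> ln (1 + rsum j w) / (2 * lam j) <= tau) ->
  0 <= tau -> tau < t ->
  Dc t <= c + t / (t - tau) * exp (- (2 * lam j0) * (t - tau)).
Proof.
  intros Hl0 Hlp Hj0 Hc Htau Htau0 Ht. unfold Dc.
  replace N with ((j0 - 1) + S (N - j0))%nat at 1 by lia. rewrite rsum_app.
  apply Rplus_le_compat.
  - apply Rle_trans with (rsum (j0 - 1) w); auto. apply rsum_le. intros i Hi.
    assert (exp (- (2 * lam (S i)) * t) <= 1).
    { rewrite <- exp_0. apply exp_le. specialize (Hl0 (S i) ltac:(lia)). nra. }
    specialize (wpos i ltac:(lia)). nra.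
  - pose (u := fun k => 2 * lam (j0 + k)%nat).
    pose (q := fun k => w (j0 - 1 + k)%nat).
    rewrite (rsum_ext _ _ (fun k => q k * exp (- u k * t))).
    2:{ intros k Hk. unfold q, u. replace (S (j0 - 1 + k)) with (j0 + k)%nat by lia. reflexivity. }
    replace (- (2 * lam j0) * (t - tau)) with (- u 0%nat * (t - tau)) by (unfold u; rewrite Nat.add_0_r; ring).
    apply key_abs with (Q := rsum (j0 - 1) w); auto.
    + apply rsum_nonneg; intros; apply wpos; lia.
    + intros k Hk. unfold q. apply wpos; lia.
    + intros k Hk. unfold u. replace (j0 + S k)%nat with (S (j0 + k)) by lia.
      specialize (lammono (j0 + k)%nat ltac:(lia) ltac:(lia)). lra.
    + intros k Hk. unfold q.
      replace (rsum (j0 - 1) w + rsum (S k) (fun k0 => w (j0 - 1 + k0)%nat)) with (rsum (j0 + k) w).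
      2:{ replace (j0 + k)%nat with ((j0 - 1) + S k)%nat by lia. rewrite rsum_app. auto. }
      assert (HS : 0 <= rsum (j0 + k) w) by (apply rsum_nonneg; intros; apply wpos; lia).
      assert (1 + rsum (j0 + k) w <= exp (u k * tau)).
      { apply ln_le_exp; [lra|]. specialize (Htau (j0 + k)%nat ltac:(lia)).
        specialize (Hlp (j0 + k)%nat ltac:(lia)). unfold u.
        apply Rmult_le_reg_r with (/ (2 * lam (j0 + k)%nat)).
        - apply Rinv_0_lt_compat; lra.
        - replace (2 * lam (j0 + k)%nat * tau * / (2 * lam (j0 + k)%nat)) with tau by (field; lra). exact Htau. }
      lra.
Qed.

Lemma contA j c T : (1 <= j <= N)%nat -> 0 <= c -> c < rsum j w -> 0 < lam j ->
  (forall i, (1 <= i <= N)%nat -> 0 <= lam i) ->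
  0 <= T -> Dc T <= c / (1 + c) -> ln (1 + rsum j w) / (2 * lam j) <= T.
Proof.
  intros Hj Hc HcS Hl Hl0 HT HD. set (S_ := rsum j w) in *.
  assert (H1 : S_ * exp (- (2 * lam j) * T) <= Dc T).
  { apply Rle_trans with (rsum j (fun i => w i * exp (- (2 * lam (S i)) * T))).
    - unfold S_. rewrite <- rsum_scal_r. apply rsum_le. intros i Hi.
      apply Rmult_le_compat_l. apply wpos; lia. apply exp_le.
      assert (lam (S i) <= lam j) by (apply (chain_mono lam N lammono); lia). nra.
    - unfold Dc. apply rsum_prefix_le. lia. intros i Hi. apply Rmult_le_pos; [apply wpos; auto| left; apply exp_pos]. }
  assert (H2 : c / (1 + c) < S_ / (1 + S_)).
  { apply Rmult_lt_reg_r with ((1 + c) * (1 + S_)). nra.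
    unfold Rdiv. replace (c * / (1 + c) * ((1 + c) * (1 + S_))) with (c * (1 + S_)) by (field; lra).
    replace (S_ * / (1 + S_) * ((1 + c) * (1 + S_))) with (S_ * (1 + c)) by (field; lra). nra. }
  set (E := exp (- (2 * lam j) * T)).
  assert (HE : 0 < E) by apply exp_pos.
  assert (H3 : E * (1 + S_) < 1).
  { assert (S_ * E < S_ / (1 + S_)) by (unfold E; lra).
    assert (S_ * E * (1 + S_) < S_) by (apply Rmult_lt_reg_r with (/ (1 + S_)); [apply Rinv_0_lt_compat; lra|]; unfold Rdiv in *; replace (S_ * E * (1 + S_) * / (1 + S_)) with (S_ * E) by (field; lra); replace (S_ * / (1 + S_)) with (S_ / (1 + S_)) by auto; unfold Rdiv; lra).
    nra. }
  assert (H4 : ln (E * (1 + S_)) < 0).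
  { rewrite <- ln_1. apply ln_increasing; auto. nra. }
  rewrite ln_mult in H4 by lra. unfold E in H4. rewrite ln_exp in H4.
  apply Rmult_le_reg_r with (2 * lam j). lra.
  unfold Rdiv. rewrite Rmult_assoc, Rinv_l by lra. nra.
Qed.
End Abs.

Lemma cont_term a b : continuity (fun t => a * exp (b * t)).
Proof. apply derivable_continuous. reg. Qed.

Lemma cont_rsum N (f : nat -> R -> R) : (forall i, continuity (f i)) ->
  continuity (fun t => rsum N (fun i => f i t)).
Proof.
  intros H. induction N; simpl.
  - apply continuity_const. intros x y; auto.
  - apply (continuity_plus (fun t => rsum N (fun i => f i t)) (f N)); auto.
Qed.

Lemma sqrt_le_iff x e : 0 <= x -> 0 < e -> (sqrt x <= e <-> x <= e ^ 2).
Proof.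
  intros Hx He. split; intros H.
  - assert (0 <= sqrt x) by apply sqrt_pos. rewrite <- (sqrt_sqrt x Hx). nra.
  - rewrite <- (sqrt_pow2 e) by lra. apply sqrt_le_1_alt. auto.
Qed.

Lemma min_pos N (l : nat -> R) : (forall i, (i < N)%nat -> 0 < l i) ->
  exists m, 0 < m /\ forall i, (i < N)%nat -> m <= l i.
Proof.
  induction N; intros H.
  - exists 1; split; [lra| intros; lia].
  - destruct IHN as [m [Hm Hl]]; [intros; apply H; lia|].
    exists (Rmin m (l N)). split. { apply Rmin_pos; [auto| apply H; lia]. }
    intros i Hi. destruct (Nat.eq_dec i N). subst; apply Rmin_r.
    apply Rle_trans with m. apply Rmin_l. apply Hl; lia.
Qed.

Section T2cEx.
Variable N : nat.
Variable w : nat -> R.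
Variable l : nat -> R.
Hypothesis wpos : forall i, (i < N)%nat -> 0 <= w i.
Hypothesis lpos : forall i, (i < N)%nat -> 0 < l i.
Let D t := rsum N (fun i => w i * exp (- l i * t)).

Lemma D_nn t : 0 <= D t.
Proof. apply rsum_nonneg; intros i Hi. apply Rmult_le_pos; [auto| left; apply exp_pos]. Qed.

Lemma D_cont : continuity D.
Proof. unfold D. apply cont_rsum. intros i. apply (cont_term (w i) (- l i)). Qed.

Lemma D_strict t t' : (exists i, (i < N)%nat /\ 0 < w i) -> t < t' -> D t' < D t.
Proof.
  intros [i [Hi Hw]] Htt. unfold D. apply rsum_lt.
  - intros k Hk. apply Rmult_le_compat_l. auto. apply exp_le. specialize (lpos k Hk). nra.
  - exists i. split; auto. apply Rmult_lt_compat_l; auto. apply exp_increasing. specialize (lpos i Hi). nra.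
Qed.

Lemma D_small e : 0 < e -> exists T1, 0 <= T1 /\ D T1 < e.
Proof.
  intros He. destruct (min_pos N l lpos) as [m [Hm Hml]].
  set (W := rsum N w).
  assert (HW : 0 <= W) by (apply rsum_nonneg; auto).
  set (z := W / e + 1).
  assert (Hz : 1 <= z) by (unfold z; assert (0 <= W / e) by (apply Rmult_le_pos; [lra| left; apply Rinv_0_lt_compat; lra]); lra).
  exists (ln z / m). split.
  - apply Rmult_le_pos. rewrite <- ln_1. destruct Hz as [Hz|Hz]; [left; apply ln_increasing; lra| rewrite Hz; lra].
    left; apply Rinv_0_lt_compat; auto.
  - apply Rle_lt_trans with (W * exp (- m * (ln z / m))).
    + unfold D, W. rewrite <- rsum_scal_r. apply rsum_le. intros i Hi. apply Rmult_le_compat_l; auto.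
      apply exp_le. specialize (Hml i Hi).
      assert (0 <= ln z / m). { apply Rmult_le_pos. rewrite <- ln_1. destruct Hz as [Hz|Hz]; [left; apply ln_increasing; lra| rewrite Hz; lra]. left; apply Rinv_0_lt_compat; auto. }
      nra.
    + replace (- m * (ln z / m)) with (- ln z) by (field; lra). rewrite exp_Ropp, exp_ln by lra.
      apply Rmult_lt_reg_r with z. lra.
      rewrite Rmult_assoc, Rinv_l by lra. unfold z, Rdiv.
      replace (e * (W * / e + 1)) with (W + e) by (field; lra). lra.
Qed.

Lemma T2c_exists e : 0 < e -> exists T, 0 <= T /\ sqrt (D T) <= e /\
   forall t, 0 <= t -> sqrt (D t) <= e -> T <= t.
Proof.
  intros He.
  destruct (Rle_dec (D 0) (e ^ 2)) as [H0|H0].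
  - exists 0. split; [lra|]. split. apply sqrt_le_iff; auto. apply D_nn. intros; auto.
  - assert (Hex : exists i, (i < N)%nat /\ 0 < w i).
    { apply NNPP. intros Hn. apply H0. unfold D. replace (rsum N (fun i => w i * exp (- l i * 0))) with 0.
      apply pow2_ge_0. rewrite <- (Rmult_0_l (INR N)). rewrite Rmult_comm. rewrite <- rsum_const.
      apply rsum_ext. intros i Hi. destruct (wpos i Hi) as [Hw|Hw]. exfalso; apply Hn; exists i; auto. rewrite <- Hw; ring. }
    destruct (D_small (e ^ 2) ltac:(nra)) as [T1 [HT1 HDT1]].
    assert (HT1p : 0 < T1).
    { destruct HT1 as [|HT1]; auto. subst. lra. }
    destruct (IVT (fun t => e ^ 2 - D t) 0 T1) as [z [Hz Hfz]].
    + apply continuity_minus. apply continuity_const; intros ? ?; auto. apply D_cont.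
    + auto.
    + lra.
    + lra.
    + exists z. split; [lra|]. split.
      * apply sqrt_le_iff; auto. apply D_nn. lra.
      * intros t Ht Hdt. apply sqrt_le_iff in Hdt; auto; [|apply D_nn].
        destruct (Rle_dec z t) as [|Hzt]; auto. exfalso.
        assert (D z < D t) by (apply D_strict; auto; lra). lra.
Qed.
End T2cEx.

Lemma T2c_spec d e : (exists T, 0 <= T /\ d T <= e /\ forall t, 0 <= t -> d t <= e -> T <= t) ->
  0 <= T2c d e /\ d (T2c d e) <= e /\ forall t, 0 <= t -> d t <= e -> T2c d e <= t.
Proof. intros H. unfold T2c. apply epsilon_spec. exact H. Qed.

Lemma nat_least (P : nat -> Prop) k : P k -> exists m, P m /\ forall j, P j -> (m <= j)%nat.
Proof.
  revert P. induction k as [k IH] using (well_founded_induction Nat.lt_wf_0). intros P Hk.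
  destruct (classic (exists j, (j < k)%nat /\ P j)) as [[j [Hj HPj]]|Hn].
  - apply (IH j Hj P HPj).
  - exists k. split; auto. intros j HPj. destruct (Nat.lt_ge_cases j k); auto. exfalso; apply Hn; eauto.
Qed.

Lemma T2d_spec (d : nat -> R) e :
  (exists m, T2d d e = Fin (INR m) /\ d m <= e /\ forall k, d k <= e -> (m <= k)%nat) \/
  (T2d d e = PInf /\ forall k, e < d k).
Proof.
  assert (Hex : exists T : ER, match T with
    | Fin t => exists m : nat, t = INR m /\ d m <= e /\ forall k : nat, d k <= e -> (m <= k)%nat
    | PInf => forall k : nat, e < d k end).
  { destruct (classic (exists k, d k <= e)) as [[k Hk]|Hn].
    - destruct (nat_least (fun k => d k <= e) k Hk) as [m [Hm Hmin]].
      exists (Fin (INR m)). exists m. auto.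
    - exists PInf. intros k. apply Rnot_le_lt. intros H. apply Hn. eauto. }
  assert (HS := epsilon_spec (inhabits PInf) _ Hex). fold (T2d d e) in HS.
  destruct (T2d d e) as [t|].
  - left. destruct HS as [m [Ht [Hm Hmin]]]. subst. exists m. auto.
  - right. auto.
Qed.



Lemma lfind_none P m : lfind P m = None -> forall k, (1 <= k <= m)%nat -> P k = false.
Proof.
  induction m; intros H k Hk; [lia|]. simpl in H.
  destruct (lfind P m) eqn:E; [discriminate|].
  destruct (P (S m)) eqn:EP; [discriminate|].
  destruct (Nat.eq_dec k (S m)). subst; auto. apply IHm; auto; lia.
Qed.

Lemma lfind_some P m j : lfind P m = Some j ->
  (1 <= j <= m)%nat /\ P j = true /\ forall k, (1 <= k < j)%nat -> P k = false.
Proof.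
  revert j. induction m; intros j H; simpl in H; [discriminate|].
  destruct (lfind P m) as [j'|] eqn:E.
  - inversion H; subst. destruct (IHm j eq_refl) as [A [B C]]. split; [lia|auto].
  - destruct (P (S m)) eqn:EP; [|discriminate]. inversion H; subst.
    split; [lia|]. split; auto. intros k Hk. apply (lfind_none P m E). lia.
Qed.

Lemma Ssum_mono n mu phi j k : (j <= k)%nat -> Ssum n mu phi j <= Ssum n mu phi k.
Proof.
  intros H. unfold Ssum. replace k with (j + (k - j))%nat by lia. rewrite rsum_app.
  assert (0 <= rsum (k - j) (fun i => muphi n mu phi (S (j + i))^2)) by (apply rsum_nonneg; intros; apply pow2_ge_0).
  lra.
Qed.

Lemma jidx_spec n mu phi c : 0 < c -> c < Ssum n mu phi (n - 1) ->
  (1 <= jidx n mu phi c <= n - 1)%nat /\ c < Ssum n mu phi (jidx n mu phi c) /\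
  Ssum n mu phi (jidx n mu phi c - 1) <= c.
Proof.
  intros Hc HcS. unfold jidx.
  set (P := fun j => if Rlt_dec c (Ssum n mu phi j) then true else false).
  assert (Hn : (1 <= n - 1)%nat).
  { destruct (n - 1)%nat eqn:E; [|lia]. simpl in HcS. unfold Ssum in HcS. simpl in HcS. lra. }
  destruct (lfind P (n - 1)) as [j|] eqn:E.
  - destruct (lfind_some P _ _ E) as [Hj [HP Hk]]. unfold P in HP.
    destruct (Rlt_dec c (Ssum n mu phi j)) as [Hlt|]; [|discriminate].
    split; auto. split; auto.
    destruct (Nat.eq_dec j 1) as [->|Hj1].
    + simpl. unfold Ssum; simpl. lra.
    + specialize (Hk (j - 1)%nat ltac:(lia)). unfold P in Hk.
      destruct (Rlt_dec c (Ssum n mu phi (j - 1))); [discriminate|]. lra.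
  - exfalso. assert (H := lfind_none P _ E (n - 1)%nat ltac:(lia)). unfold P in H.
    destruct (Rlt_dec c (Ssum n mu phi (n - 1))); [discriminate| lra].
Qed.

Lemma rmaxr_ge f a k : forall j, (a <= j <= a + k)%nat -> f j <= rmaxr f a k.
Proof.
  induction k; intros j Hj; simpl.
  - replace j with a by lia. lra.
  - destruct (Nat.eq_dec j (a + S k)) as [->|Hne].
    + apply Rmax_r.
    + apply Rle_trans with (rmaxr f a k). apply IHk; lia. apply Rmax_l.
Qed.

Lemma rmaxr_attain f a k : exists j, (a <= j <= a + k)%nat /\ rmaxr f a k = f j.
Proof.
  induction k; simpl.
  - exists a. split; [lia|auto].
  - destruct IHk as [j [Hj E]]. unfold Rmax.
    destruct (Rle_dec (rmaxr f a k) (f (a + S k)%nat)).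
    + exists (a + S k)%nat. split; [lia|auto].
    + exists j. split; [lia|auto].
Qed.

Lemma ERle_trans x y z : ERle x y -> ERle y z -> ERle x z.
Proof. destruct x, y, z; simpl; intros; auto; try lra; contradiction. Qed.

Lemma ermax_l x y : ERle x (ermax x y).
Proof. destruct x, y; simpl; auto. apply Rmax_l. Qed.
Lemma ermax_r x y : ERle y (ermax x y).
Proof. destruct x, y; simpl; auto. apply Rmax_r. Qed.
Lemma ermax_lub x y z : ERle x z -> ERle y z -> ERle (ermax x y) z.
Proof. destruct x, y, z; simpl; auto. intros. apply Rmax_lub; auto. Qed.

Lemma ermaxr_ge f a k : forall j, (a <= j <= a + k)%nat -> ERle (f j) (ermaxr f a k).
Proof.
  induction k; intros j Hj; simpl.
  - replace j with a by lia. destruct (f a); simpl; auto; lra.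
  - destruct (Nat.eq_dec j (a + S k)) as [->|Hne].
    + apply ermax_r.
    + eapply ERle_trans. apply IHk; lia. apply ermax_l.
Qed.

Lemma ermaxr_le f a k X : (forall j, (a <= j <= a + k)%nat -> ERle (f j) X) -> ERle (ermaxr f a k) X.
Proof.
  induction k; intros H; simpl.
  - apply H; lia.
  - apply ermax_lub. apply IHk; intros; apply H; lia. apply H; lia.
Qed.

Lemma ln_le x y : 0 < x -> x <= y -> ln x <= ln y.
Proof. intros Hx [H|H]; [left; apply ln_increasing; auto| subst; lra]. Qed.

Lemma ln_lower c : 0 <= c -> c / (1 + c) <= ln (1 + c).
Proof.
  intros Hc. set (z := c / (1 + c)).
  assert (H1 := exp_ineq1_le (- z)).
  assert (Hz : 1 - z = / (1 + c)) by (unfold z; field; lra).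
  assert (exp z <= 1 + c).
  { assert (0 < exp z) by apply exp_pos.
    assert (E : exp z * exp (- z) = 1) by (rewrite <- exp_plus; replace (z + - z) with 0 by ring; apply exp_0).
    assert (exp z * (1 - z) <= 1) by (rewrite <- E; apply Rmult_le_compat_l; lra).
    rewrite Hz in H0. apply Rmult_le_reg_r with (/ (1 + c)). apply Rinv_0_lt_compat; lra.
    rewrite Rinv_r by lra. lra. }
  rewrite <- (ln_exp z). apply ln_le; auto. apply exp_pos.
Qed.

Lemma lt_sqrt_sq e x : 0 < e -> e < sqrt x -> e ^ 2 < x.
Proof.
  intros He H. destruct (Rle_dec x 0) as [Hx|Hx].
  - rewrite sqrt_neg_0 in H by auto. lra.
  - rewrite <- (sqrt_sqrt x) by lra. assert (0 <= sqrt x) by apply sqrt_pos. nra.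
Qed.

Lemma Rdiv_le_0_compat a b : 0 <= a -> 0 < b -> 0 <= a / b.
Proof. intros; apply Rmult_le_pos; auto; left; apply Rinv_0_lt_compat; auto. Qed.

Section Cont.
Variables (n : nat) (L : nat -> nat -> R) (pi mu lam : nat -> R) (phi : nat -> nat -> R).
Hypothesis Hpi : is_pos_prob n pi.
Hypothesis Hmu : is_prob n mu.
Hypothesis Heig : eigen_c n L pi lam phi.

Let w i := muphi n mu phi (S i) ^ 2.
Let N := (n - 1)%nat.

Lemma c_pipos : forall x, (x < n)%nat -> 0 < pi x.
Proof. apply Hpi. Qed.
Lemma c_orth : forall i k, (i < n)%nat -> (k < n)%nat ->
     rsum n (fun x => phi i x * phi k x * pi x) = if Nat.eqb i k then 1 else 0.
Proof. apply Heig. Qed.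

Hypothesis Hn : (1 <= N)%nat.

Lemma c_V : pisq n pi (fun x => mu x / pi x) - 1 = Ssum n mu phi N /\
            pisq n pi (fun x => mu x / pi x - 1) = Ssum n mu phi N.
Proof.
  destruct Hpi as [_ Hps]. destruct Hmu as [_ Hms]. destruct Heig as [_ [_ [_ [Hp0 _]]]].
  assert (H2 := pisq_mu n pi phi c_pipos c_orth mu Hms Hp0 ltac:(unfold N in *; lia)).
  rewrite (pisq_mu2 n pi c_pipos mu Hms Hps). auto.
Qed.

Lemma lam_pos j : (1 <= j <= N)%nat -> 0 < lam j.
Proof.
  intros Hj. destruct Heig as [_ [_ [_ [_ [H1 Hmono]]]]].
  assert (0 < lam 1%nat) by (apply H1; unfold N in *; lia).
  assert (lam 1%nat <= lam j).
  { apply (chain_mono lam N); try lia. intros k Hk HkN. apply Hmono; unfold N in *; lia. }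
  lra.
Qed.

Lemma lam_mono : forall j, (1 <= j)%nat -> (S j <= N)%nat -> lam j <= lam (S j).
Proof. intros. destruct Heig as [_ [_ [_ [_ [_ Hmono]]]]]. apply Hmono; unfold N in *; lia. Qed.

Lemma w_pos : forall i, (i < N)%nat -> 0 <= w i.
Proof. intros; unfold w; apply pow2_ge_0. Qed.

Lemma d2_form : d2_cont n L pi mu = fun t => sqrt (Dc N w lam t).
Proof.
  apply functional_extensionality. intros t.
  destruct Heig as [Hev [_ [Hl0 [Hp0 _]]]]. destruct Hmu as [_ Hms].
  unfold d2_cont, l2norm. f_equal.
  change (rsum n (fun y => (rsum n (fun x => mu x * mexp n L t x y) / pi y - 1) ^ 2 * pi y))
    with (pisq n pi (fun y => rsum n (fun x => mu x * mexp n L t x y) / pi y - 1)).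
  rewrite (dist_spec n pi phi c_pipos c_orth mu Hms Hp0 ltac:(unfold N in *; lia)
      (fun i => exp (- lam i * t)) (mexp n L t)).
  - unfold Dc. apply rsum_ext. intros i Hi. unfold w.
    replace (exp (- (2 * lam (S i)) * t)) with (exp (- lam (S i) * t) ^ 2).
    + ring.
    + simpl. rewrite Rmult_1_r, <- exp_plus. f_equal. ring.
  - rewrite Hl0. replace (- 0 * t) with 0 by ring. apply exp_0.
  - intros x y Hx Hy. apply (mexp_spec n pi phi c_pipos c_orth L lam); auto.
Qed.

Lemma T2_spec e : 0 < e ->
  let T := T2c (d2_cont n L pi mu) e in
  0 <= T /\ Dc N w lam T <= e ^ 2 /\ forall t, 0 <= t -> Dc N w lam t <= e ^ 2 -> T <= t.
Proof.
  intros He T. unfold T. rewrite d2_form.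
  assert (Hex := T2c_exists N w (fun i => 2 * lam (S i)) w_pos
                 (fun i Hi => ltac:(assert (0 < lam (S i)) by (apply lam_pos; lia); lra)) e He).
  destruct (T2c_spec (fun t => sqrt (Dc N w lam t)) e Hex) as [A [B C]].
  assert (Dnn : forall t, 0 <= Dc N w lam t).
  { intros t. apply rsum_nonneg. intros i Hi. apply Rmult_le_pos. apply w_pos; auto. left; apply exp_pos. }
  split; auto. split. apply sqrt_le_iff; auto.
  intros t Ht HD. apply C; auto. apply sqrt_le_iff; auto.
Qed.

Lemma Ssum_w j : Ssum n mu phi j = rsum j w.
Proof. reflexivity. Qed.

Lemma c_upper c T : 0 < c -> c < Ssum n mu phi N -> 0 <= T -> Dc N w lam T <= c / (1 + c) ->
  tau_c n mu phi lam c <= T.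
Proof.
  intros Hc HcV HT HD.
  destruct (jidx_spec n mu phi c Hc HcV) as [Hj0 [Hj0c Hj0p]].
  unfold tau_c. set (j0 := jidx n mu phi c) in *.
  destruct (rmaxr_attain (fun j => ln (1 + Ssum n mu phi j) / (2 * lam j)) j0 (n - 1 - j0)) as [j [Hj E]].
  rewrite E. apply (contA N w lam w_pos lam_mono j c T); auto.
  - unfold N; lia.
  - lra.
  - apply Rlt_le_trans with (Ssum n mu phi j0); auto. apply Ssum_mono. lia.
  - apply lam_pos. unfold N; lia.
  - intros; left; apply lam_pos; auto.
Qed.

Lemma c_tau_facts c : 0 < c -> c < Ssum n mu phi N ->
  let j0 := jidx n mu phi c in let tau := tau_c n mu phi lam c in
  (1 <= j0 <= N)%nat /\ rsum (j0 - 1) w <= c /\ c < rsum j0 w /\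
  ln (1 + rsum j0 w) / (2 * lam j0) <= tau /\ 0 < tau /\
  (forall j, (j0 <= j <= N)%nat -> ln (1 + rsum j w) / (2 * lam j) <= tau).
Proof.
  intros Hc HcV j0 tau.
  destruct (jidx_spec n mu phi c Hc HcV) as [Hj0 [Hj0c Hj0p]]. fold j0 in Hj0, Hj0c, Hj0p.
  assert (Hall : forall j, (j0 <= j <= N)%nat -> ln (1 + rsum j w) / (2 * lam j) <= tau).
  { intros j Hj. unfold tau, tau_c. fold j0.
    apply (rmaxr_ge (fun j => ln (1 + Ssum n mu phi j) / (2 * lam j)) j0 (n - 1 - j0)). unfold N in *; lia. }
  assert (Hl : 0 < lam j0) by (apply lam_pos; auto).
  assert (Hpos : 0 < ln (1 + rsum j0 w) / (2 * lam j0)).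
  { apply Rdiv_lt_0_compat; [|lra]. rewrite <- ln_1. apply ln_increasing; [lra|].
    rewrite <- Ssum_w. lra. }
  split; auto. split; [exact Hj0p|]. split; [exact Hj0c|]. split. apply Hall; lia.
  split; auto. assert (ln (1 + rsum j0 w) / (2 * lam j0) <= tau) by (apply Hall; lia). lra.
Qed.

Lemma c_bound c t : 0 < c -> c < Ssum n mu phi N -> tau_c n mu phi lam c < t ->
  Dc N w lam t <= c + t / (t - tau_c n mu phi lam c) *
     exp (- (2 * lam (jidx n mu phi c)) * (t - tau_c n mu phi lam c)).
Proof.
  intros Hc HcV Ht.
  destruct (c_tau_facts c Hc HcV) as [Hj0 [Hp [Hlt [Ht0 [Htp Hall]]]]].
  apply (contB N w lam w_pos lam_mono); auto.
  - intros; left; apply lam_pos; auto.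
  - intros; apply lam_pos; lia.
  - lra.
Qed.

Lemma cont_part1 c A : 0 < c -> c < pisq n pi (fun x => mu x / pi x) - 1 -> 0 < A ->
        let al := alpha_c n mu phi lam c in
        al / (al + A) *
          T2c (d2_cont n L pi mu) (sqrt (c + (A + al) / (A * exp (al * A))))
          <= tau_c n mu phi lam c
        /\ tau_c n mu phi lam c <= T2c (d2_cont n L pi mu) (sqrt (c / (1 + c))).
Proof.
  intros Hc HcV HA al. destruct c_V as [V1 _]. rewrite V1 in HcV.
  destruct (c_tau_facts c Hc HcV) as [Hj0 [Hp [Hlt [Ht0 [Htp Hall]]]]].
  set (tau := tau_c n mu phi lam c) in *. set (j0 := jidx n mu phi c) in *.
  assert (Hl : 0 < lam j0) by (apply lam_pos; auto).
  split.
  - assert (Hal : al = sqrt (tau * lam j0)) by reflexivity.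
    assert (Halp : 0 < al) by (rewrite Hal; apply sqrt_lt_R0; nra).
    assert (Hal2 : al * al = tau * lam j0) by (rewrite Hal; apply sqrt_sqrt; nra).
    set (e := sqrt (c + (A + al) / (A * exp (al * A)))).
    assert (Hq : 0 < (A + al) / (A * exp (al * A))).
    { apply Rdiv_lt_0_compat. lra. apply Rmult_lt_0_compat; auto; apply exp_pos. }
    assert (He : 0 < e) by (apply sqrt_lt_R0; lra).
    assert (He2 : e ^ 2 = c + (A + al) / (A * exp (al * A))) by (unfold e; rewrite <- Rsqr_pow2; apply Rsqr_sqrt; lra).
    destruct (T2_spec e He) as [HT0 [HT1 HT2]].
    set (ts := tau * (al + A) / al).
    assert (Hts : tau < ts).
    { unfold ts. apply Rmult_lt_reg_r with al; auto. unfold Rdiv. rewrite Rmult_assoc, Rinv_l by lra. nra. }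
    assert (HD := c_bound c ts Hc HcV Hts). fold tau j0 in HD.
    assert (E1 : ts - tau = tau * A / al) by (unfold ts; field; lra).
    assert (E2 : ts / (ts - tau) = (al + A) / A) by (rewrite E1; unfold ts; field; repeat split; lra).
    assert (E3 : - (2 * lam j0) * (ts - tau) = - (2 * (al * A))).
    { rewrite E1. apply Rmult_eq_reg_r with al; [|lra]. unfold Rdiv.
      replace (- (2 * lam j0) * (tau * A * / al) * al) with (- (2 * (tau * lam j0 * A))) by (field; lra).
      rewrite <- Hal2. ring. }
    rewrite E2, E3 in HD.
    assert (Hexp : exp (- (2 * (al * A))) <= / exp (al * A)).
    { rewrite <- exp_Ropp. apply exp_le. assert (0 < al * A) by nra. lra. }
    assert (HD' : Dc N w lam ts <= e ^ 2).
    { rewrite He2. apply Rle_trans with (1 := HD). apply Rplus_le_compat_l.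
      replace ((A + al) / (A * exp (al * A))) with ((al + A) / A * / exp (al * A)).
      2:{ field. split. apply exp_neq_0. lra. }
      apply Rmult_le_compat_l; auto. apply Rdiv_le_0_compat; lra. }
    assert (HT := HT2 ts ltac:(lra) HD').
    apply Rle_trans with (al / (al + A) * ts).
    + apply Rmult_le_compat_l; auto. apply Rdiv_le_0_compat; lra.
    + unfold ts. right. field. lra.
  - assert (He : 0 < sqrt (c / (1 + c))) by (apply sqrt_lt_R0; apply Rdiv_lt_0_compat; lra).
    destruct (T2_spec _ He) as [HT0 [HT1 HT2]].
    apply c_upper; auto. rewrite <- Rsqr_pow2, Rsqr_sqrt in HT1; auto. left; apply Rdiv_lt_0_compat; lra.
Qed.

Lemma cont_part2 eps : 0 < eps ->
        eps < sqrt (Rmin (pisq n pi (fun x => mu x / pi x - 1)) 1 / 2) ->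
        tau_c n mu phi lam (2 * eps ^ 2) <= T2c (d2_cont n L pi mu) eps
        /\ T2c (d2_cont n L pi mu) eps <= 6 / eps ^ 4 * tau_c n mu phi lam (eps ^ 2 / 2).
Proof.
  intros He Hlt. destruct c_V as [_ V2]. rewrite V2 in Hlt.
  apply lt_sqrt_sq in Hlt; auto.
  assert (H1 : 2 * eps ^ 2 < Ssum n mu phi N) by (assert (H := Rmin_l (Ssum n mu phi N) 1); lra).
  assert (H2 : 2 * eps ^ 2 < 1) by (assert (H := Rmin_r (Ssum n mu phi N) 1); lra).
  assert (Hep : 0 < eps ^ 2) by nra.
  destruct (T2_spec eps He) as [HT0 [HT1 HT2]].
  split.
  - apply c_upper; auto. lra.
    apply Rle_trans with (1 := HT1). apply Rmult_le_reg_r with (1 + 2 * eps ^ 2). lra.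
    unfold Rdiv. rewrite Rmult_assoc, Rinv_l by lra. nra.
  - set (c := eps ^ 2 / 2).
    assert (Hc : 0 < c) by (unfold c; lra). assert (HcV : c < Ssum n mu phi N) by (unfold c; lra).
    destruct (c_tau_facts c Hc HcV) as [Hj0 [Hp [Hlt0 [Ht0 [Htp Hall]]]]].
    set (tau := tau_c n mu phi lam c) in *. set (j0 := jidx n mu phi c) in *.
    assert (Hl : 0 < lam j0) by (apply lam_pos; auto).
    set (k := 6 / eps ^ 4).
    assert (He4 : eps ^ 4 = eps ^ 2 * eps ^ 2) by ring.
    assert (Hk : 1 < k) by (unfold k; apply Rmult_lt_reg_r with (eps ^ 4); [nra|]; unfold Rdiv; rewrite Rmult_assoc, Rinv_l by nra; nra).
    assert (Hts : tau < k * tau) by nra.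
    assert (HD := c_bound c (k * tau) Hc HcV Hts). fold tau j0 in HD.
    assert (E2 : k * tau / (k * tau - tau) = k / (k - 1)) by (field; split; lra).
    rewrite E2 in HD.
    assert (Hkk : k / (k - 1) <= 2).
    { apply Rmult_le_reg_r with (k - 1). lra. unfold Rdiv. rewrite Rmult_assoc, Rinv_l by lra.
      assert (k >= 2). { unfold k. apply Rle_ge. apply Rmult_le_reg_r with (eps ^ 4); [nra|]. unfold Rdiv. rewrite Rmult_assoc, Rinv_l by nra. nra. }
      lra. }
    set (y := 2 * lam j0 * (k * tau - tau)).
    assert (Hy1 : ln (1 + c) * (k - 1) <= y).
    { unfold y. replace (2 * lam j0 * (k * tau - tau)) with ((2 * lam j0 * tau) * (k - 1)) by ring.
      apply Rmult_le_compat_r; [lra|].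
      assert (ln (1 + c) <= ln (1 + rsum j0 w)) by (apply ln_le; lra).
      assert (ln (1 + rsum j0 w) <= 2 * lam j0 * tau).
      { apply Rmult_le_reg_r with (/ (2 * lam j0)). apply Rinv_0_lt_compat; lra.
        replace (2 * lam j0 * tau * / (2 * lam j0)) with tau by (field; lra). exact Ht0. }
      lra. }
    assert (Hlnc := ln_lower c ltac:(lra)).
    assert (Hc1 : c / (1 + c) >= 2 / 5 * eps ^ 2).
    { apply Rle_ge. apply Rmult_le_reg_r with (1 + c). lra.
      replace (c / (1 + c) * (1 + c)) with c by (field; lra). unfold c. nra. }
    assert (Hk1 : (k - 1) * eps ^ 4 >= 23 / 4).
    { unfold k. rewrite Rmult_minus_distr_r. replace (6 / eps ^ 4 * eps ^ 4) with 6 by (field; nra). nra. }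
    set (x := / eps ^ 2).
    assert (Hx : x * eps ^ 2 = 1) by (unfold x; field; lra).
    assert (Hx2 : 2 <= x). { apply Rmult_le_reg_r with (eps ^ 2); auto. rewrite Hx. lra. }
    assert (Hy : 23 / 10 * x <= y).
    { apply Rle_trans with (2 := Hy1). apply Rle_trans with (c / (1 + c) * (k - 1)); [|apply Rmult_le_compat_r; lra].
      apply Rle_trans with (2 / 5 * eps ^ 2 * (k - 1)); [|apply Rmult_le_compat_r; lra].
      assert (Hkx : k - 1 >= 23 / 4 * x * x).
      { apply Rle_ge. apply Rmult_le_reg_r with (eps ^ 4). nra.
        replace (23 / 4 * x * x * eps ^ 4) with (23 / 4 * (x * eps ^ 2) * (x * eps ^ 2)) by ring.
        rewrite Hx. lra. }
      assert (2 / 5 * eps ^ 2 * (23 / 4 * x * x) = 23 / 10 * x).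
      { transitivity (23/10 * x * (x * eps ^ 2)). field. rewrite Hx. ring. }
      nra. }
    assert (Hexpy : 4 * x <= exp y).
    { assert (E : exp y = exp (y / 2) * exp (y / 2)) by (rewrite <- exp_plus; f_equal; field).
      assert (H3 := exp_ineq1_le (y / 2)).
      assert (0 <= 1 + y / 2) by lra.
      assert ((1 + y / 2) * (1 + y / 2) <= exp (y / 2) * exp (y / 2)) by (apply Rmult_le_compat; lra).
      nra. }
    assert (HD2 : Dc N w lam (k * tau) <= eps ^ 2).
    { apply Rle_trans with (1 := HD). unfold c.
      replace (- (2 * lam j0) * (k * tau - tau)) with (- y) by (unfold y; ring).
      rewrite exp_Ropp.
      assert (0 < exp y) by apply exp_pos.
      assert (/ exp y <= eps ^ 2 / 4).
      { apply Rmult_le_reg_r with (exp y); auto. rewrite Rinv_l by lra.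
        apply Rle_trans with (eps ^ 2 / 4 * (4 * x)). right. unfold Rdiv. rewrite <- Hx. field.
        apply Rmult_le_compat_l; lra. }
      assert (0 <= k / (k - 1)) by (apply Rdiv_le_0_compat; lra).
      assert (k / (k - 1) * / exp y <= 2 * (eps ^ 2 / 4)).
      { apply Rmult_le_compat; auto. left; apply Rinv_0_lt_compat; auto. }
      lra. }
    assert (HT := HT2 (k * tau) ltac:(nra) HD2). unfold k in HT. exact HT.
Qed.
End Cont.

Lemma pow2_abs_pow b m : (b ^ m) ^ 2 = (Rabs b ^ m) ^ 2.
Proof. rewrite RPow_abs. rewrite <- Rsqr_pow2, <- Rsqr_pow2. rewrite Rsqr_abs. auto. Qed.

Lemma pow_exp_form b m : b <> 0 -> (b ^ m) ^ 2 = exp (- (2 * - ln (Rabs b)) * INR m).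
Proof.
  intros Hb. rewrite pow2_abs_pow. assert (Ha : 0 < Rabs b) by (apply Rabs_pos_lt; auto).
  rewrite <- pow_mult. rewrite <- (exp_ln (Rabs b ^ (m * 2))) by (apply pow_lt; auto).
  rewrite ln_pow by auto. f_equal. rewrite mult_INR. simpl. ring.
Qed.

Lemma abs_pow_le a b m : Rabs a <= Rabs b -> (a ^ m) ^ 2 <= (b ^ m) ^ 2.
Proof.
  intros H. rewrite (pow2_abs_pow a), (pow2_abs_pow b).
  assert (0 <= Rabs a ^ m) by (apply pow_le; apply Rabs_pos).
  assert (Rabs a ^ m <= Rabs b ^ m) by (apply pow_incr; split; auto; apply Rabs_pos).
  nra.
Qed.

Lemma pow_le1 b m : Rabs b <= 1 -> (b ^ m) ^ 2 <= 1.
Proof. intros H. apply Rle_trans with ((1 ^ m) ^ 2). apply abs_pow_le. rewrite Rabs_R1; auto. rewrite pow1; lra. Qed.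

Section DAbs.
Variable N : nat.
Variable w : nat -> R.
Variable beta : nat -> R.
Hypothesis wpos : forall i, (i < N)%nat -> 0 <= w i.
Hypothesis Babs : forall j, (1 <= j <= N)%nat -> Rabs (beta j) <= 1.
Hypothesis Bmono : forall j, (1 <= j)%nat -> (S j <= N)%nat -> Rabs (beta (S j)) <= Rabs (beta j).

Definition Dd m := rsum N (fun i => w i * (beta (S i) ^ m) ^ 2).

Lemma Bchain i j : (1 <= i)%nat -> (i <= j)%nat -> (j <= N)%nat -> Rabs (beta j) <= Rabs (beta i).
Proof.
  intros. assert (H2 := chain_mono (fun k => - Rabs (beta k)) N). simpl in H2.
  assert (- Rabs (beta i) <= - Rabs (beta j)). apply H2; auto. intros k Hk1 Hk2. specialize (Bmono k Hk1 Hk2). lra.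
  lra.
Qed.

Lemma Dd_nn m : 0 <= Dd m.
Proof. apply rsum_nonneg. intros i Hi. apply Rmult_le_pos; auto. apply pow2_ge_0. Qed.

Lemma dA c m j : 0 < c -> (1 <= j <= N)%nat -> c < rsum j w -> Dd m <= c / (1 + c) ->
  ERle (erterm (ln (1 + rsum j w)) (lam_d beta j)) (Fin (INR m)).
Proof.
  intros Hc Hj HcS HD. set (S_ := rsum j w) in *.
  assert (HS0 : 0 < S_) by lra.
  assert (H1 : S_ * (beta j ^ m) ^ 2 <= Dd m).
  { apply Rle_trans with (rsum j (fun i => w i * (beta (S i) ^ m) ^ 2)).
    - unfold S_. rewrite <- rsum_scal_r. apply rsum_le. intros i Hi.
      apply Rmult_le_compat_l. apply wpos; lia. apply abs_pow_le. apply Bchain; lia.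
    - unfold Dd. apply rsum_prefix_le. lia. intros i Hi. apply Rmult_le_pos; [apply wpos; auto| apply pow2_ge_0]. }
  assert (H2 : c / (1 + c) < S_ / (1 + S_)).
  { apply Rmult_lt_reg_r with ((1 + c) * (1 + S_)). nra.
    replace (c / (1 + c) * ((1 + c) * (1 + S_))) with (c * (1 + S_)) by (field; lra).
    replace (S_ / (1 + S_) * ((1 + c) * (1 + S_))) with (S_ * (1 + c)) by (field; lra). nra. }
  set (E := (beta j ^ m) ^ 2) in *.
  assert (H3 : E * (1 + S_) < 1).
  { assert (S_ * E < S_ / (1 + S_)) by lra.
    assert (S_ * E * (1 + S_) < S_).
    { assert (S_ * E * (1 + S_) < S_ / (1 + S_) * (1 + S_)) by (apply Rmult_lt_compat_r; lra).
      replace (S_ / (1 + S_) * (1 + S_)) with S_ in H0 by (field; lra). auto. }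
    nra. }
  unfold lam_d. destruct (Req_EM_T (beta j) 0) as [Hb|Hb].
  - simpl. apply pos_INR.
  - assert (HE := pow_exp_form (beta j) m Hb). fold E in HE.
    set (l := - ln (Rabs (beta j))) in *.
    simpl. destruct (Req_EM_T l 0) as [Hl|Hl].
    + exfalso. rewrite Hl in HE. replace (- (2 * 0) * INR m) with 0 in HE by ring. rewrite exp_0 in HE.
      rewrite HE in H3. lra.
    + simpl. destruct (Rlt_dec l 0) as [Hlt|Hlt].
      * assert (0 < ln (1 + S_)) by (rewrite <- ln_1; apply ln_increasing; lra).
        assert (ln (1 + S_) / (2 * l) < 0).
        { assert (/ (2 * l) < 0) by (apply Rinv_lt_0_compat; lra). unfold Rdiv. nra. }
        assert (0 <= INR m) by apply pos_INR. lra.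
      * assert (Hl0 : 0 < l) by lra.
        assert (H4 : ln (E * (1 + S_)) < 0).
        { rewrite <- ln_1. apply ln_increasing; auto. rewrite HE. assert (0 < exp (- (2 * l) * INR m)) by apply exp_pos. nra. }
        rewrite ln_mult in H4 by (try (rewrite HE; apply exp_pos); lra). rewrite HE, ln_exp in H4.
        apply Rmult_le_reg_r with (2 * l). lra.
        unfold Rdiv. rewrite Rmult_assoc, Rinv_l by lra. nra.
Qed.

Lemma trunc j0 : (1 <= j0 <= N)%nat -> beta j0 <> 0 ->
  exists N' : nat, (j0 <= N' <= N)%nat /\ (forall j, (1 <= j <= N')%nat -> beta j <> 0) /\ (forall j, (N' < j <= N)%nat -> beta j = 0).
Proof.
  intros Hj0 Hb.
  assert (Main : forall k, (k <= N - j0)%nat -> (forall j, (j0 + k < j <= N)%nat -> beta j = 0) ->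
     exists N' : nat, (j0 <= N' <= N)%nat /\ (forall j, (1 <= j <= N')%nat -> beta j <> 0) /\ (forall j, (N' < j <= N)%nat -> beta j = 0)).
  { induction k; intros Hk Hz.
    - exists j0. split; [lia|]. split.
      + intros j Hj Hbj. assert (Rabs (beta j0) <= Rabs (beta j)) by (apply Bchain; lia).
        rewrite Hbj, Rabs_R0 in H. assert (0 < Rabs (beta j0)) by (apply Rabs_pos_lt; auto). lra.
      + intros j Hj. apply Hz. lia.
    - destruct (Req_EM_T (beta (j0 + S k)%nat) 0) as [Hz'|Hnz].
      + apply IHk. lia. intros j Hj. destruct (Nat.eq_dec j (j0 + S k)). subst; auto. apply Hz; lia.
      + exists (j0 + S k)%nat. split; [lia|]. split.
        * intros j Hj Hbj. assert (Rabs (beta (j0 + S k)%nat) <= Rabs (beta j)) by (apply Bchain; lia).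
          rewrite Hbj, Rabs_R0 in H. assert (0 < Rabs (beta (j0 + S k)%nat)) by (apply Rabs_pos_lt; auto). lra.
        * intros j Hj; apply Hz; lia. }
  apply (Main (N - j0)%nat); [lia|]. intros; lia.
Qed.

Lemma dB0 j0 c m : (1 <= j0 <= N)%nat -> rsum (j0 - 1) w <= c -> beta j0 = 0 -> m <> 0%nat ->
  Dd m <= c.
Proof.
  intros Hj0 Hp Hb Hm. unfold Dd. replace N with ((j0 - 1) + (N - (j0 - 1)))%nat at 1 by lia.
  rewrite rsum_app.
  rewrite (rsum_ext (N - (j0 - 1)) _ (fun _ => 0)).
  - rewrite rsum_const. apply Rle_trans with (2 := Hp). rewrite Rmult_0_r, Rplus_0_r.
    apply rsum_le. intros i Hi. assert (H := pow_le1 (beta (S i)) m (Babs (S i) ltac:(lia))).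
    specialize (wpos i ltac:(lia)). nra.
  - intros i Hi. assert (Rabs (beta (S (j0 - 1 + i))) <= Rabs (beta j0)) by (apply Bchain; lia).
    rewrite Hb, Rabs_R0 in H. assert (beta (S (j0 - 1 + i)) = 0) by (destruct (Req_dec (beta (S (j0 - 1 + i))) 0) as [E|E]; auto; pose proof (Rabs_pos_lt _ E); lra).
    rewrite H0. rewrite pow_i by lia. ring.
Qed.

Lemma dB1 j0 c tau : (1 <= j0 <= N)%nat -> rsum (j0 - 1) w <= c -> 0 < c -> c < rsum j0 w ->
  beta j0 <> 0 ->
  (forall j, (j0 <= j <= N)%nat -> ERle (erterm (ln (1 + rsum j w)) (lam_d beta j)) (Fin tau)) ->
  0 < - ln (Rabs (beta j0)) /\ ln (1 + rsum j0 w) / (2 * - ln (Rabs (beta j0))) <= tau /\ 0 < tau /\ forall m : nat, tau < INR m ->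
    Dd m <= c + INR m / (INR m - tau) * exp (- (2 * - ln (Rabs (beta j0))) * (INR m - tau)).
Proof.
  intros Hj0 Hp Hc HcS Hb Hterm.
  destruct (trunc j0 Hj0 Hb) as [N' [HN' [Hnz Hz]]].
  set (l := fun j => - ln (Rabs (beta j))).
  assert (Hl0 : forall j, (1 <= j <= N')%nat -> 0 <= l j).
  { intros j Hj. unfold l. assert (0 < Rabs (beta j)) by (apply Rabs_pos_lt; apply Hnz; auto).
    assert (ln (Rabs (beta j)) <= 0) by (rewrite <- ln_1; apply ln_le; auto; apply Babs; lia). lra. }
  assert (Hlt : forall j, (j0 <= j <= N')%nat ->
     0 < l j /\ ln (1 + rsum j w) / (2 * l j) <= tau).
  { intros j Hj. specialize (Hterm j ltac:(lia)). unfold lam_d in Hterm.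
    destruct (Req_EM_T (beta j) 0) as [E|_]. exfalso; apply (Hnz j ltac:(lia) E).
    fold (l j) in Hterm. simpl in Hterm. destruct (Req_EM_T (l j) 0) as [E|Hne]. simpl in Hterm; contradiction.
    simpl in Hterm. split; auto. specialize (Hl0 j ltac:(lia)). lra. }
  assert (Hmono : forall j, (1 <= j)%nat -> (S j <= N')%nat -> l j <= l (S j)).
  { intros j H1 H2. unfold l. assert (0 < Rabs (beta (S j))) by (apply Rabs_pos_lt; apply Hnz; lia).
    assert (ln (Rabs (beta (S j))) <= ln (Rabs (beta j))) by (apply ln_le; auto; apply Bmono; lia). lra. }
  destruct (Hlt j0 ltac:(lia)) as [Hl Ht].
  assert (Hpos : 0 < ln (1 + rsum j0 w) / (2 * l j0)).
  { apply Rmult_lt_0_compat; [|apply Rinv_0_lt_compat; lra]. rewrite <- ln_1. apply ln_increasing; lra. }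
  split; auto. split; auto. split. lra.
  intros m Hm.
  assert (Hm0 : m <> 0%nat) by (intros ->; simpl in Hm; lra).
  unfold Dd. replace N with (N' + (N - N'))%nat at 1 by lia. rewrite rsum_app.
  rewrite (rsum_ext (N - N') _ (fun _ => 0)).
  2:{ intros i Hi. rewrite (Hz (S (N' + i))) by lia. rewrite pow_i by lia. ring. }
  rewrite rsum_const, Rmult_0_r, Rplus_0_r.
  rewrite (rsum_ext N' _ (fun i => w i * exp (- (2 * l (S i)) * INR m))).
  2:{ intros i Hi. rewrite pow_exp_form by (apply Hnz; lia). reflexivity. }
  apply (contB N' w l (fun i Hi => wpos i ltac:(lia)) Hmono j0 c tau (INR m)); auto.
  - intros j Hj; apply Hlt; lia.
  - lia.
  - intros j Hj; apply Hlt; lia.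
  - lra.
Qed.
End DAbs.

Lemma alpha_calc tau l A : 0 < tau -> 0 < l -> 0 < A ->
  let al := sqrt (tau * l) in let ts := tau * (al + A) / al in
  0 < al /\ tau < ts /\ ts / (ts - tau) * exp (- (2 * l) * (ts - tau)) <= (A + al) / (A * exp (al * A)).
Proof.
  intros Ht Hl HA al ts.
  assert (Halp : 0 < al) by (apply sqrt_lt_R0; nra).
  assert (Hal2 : al * al = tau * l) by (apply sqrt_sqrt; nra).
  assert (Hts : tau < ts).
  { unfold ts. apply Rmult_lt_reg_r with al; auto. unfold Rdiv. rewrite Rmult_assoc, Rinv_l by lra. nra. }
  split; auto. split; auto.
  assert (E1 : ts - tau = tau * A / al) by (unfold ts; field; lra).
  assert (E2 : ts / (ts - tau) = (al + A) / A) by (rewrite E1; unfold ts; field; repeat split; lra).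
  assert (E3 : - (2 * l) * (ts - tau) = - (2 * (al * A))).
  { rewrite E1. apply Rmult_eq_reg_r with al; [|lra]. unfold Rdiv.
    replace (- (2 * l) * (tau * A * / al) * al) with (- (2 * (tau * l * A))) by (field; lra).
    rewrite <- Hal2. ring. }
  rewrite E2, E3.
  assert (Hexp : exp (- (2 * (al * A))) <= / exp (al * A)).
  { rewrite <- exp_Ropp. apply exp_le. assert (0 < al * A) by nra. lra. }
  replace ((A + al) / (A * exp (al * A))) with ((al + A) / A * / exp (al * A)).
  2:{ field. split. apply exp_neq_0. lra. }
  apply Rmult_le_compat_l; auto. apply Rdiv_le_0_compat; lra.
Qed.

Lemma eps_calc eps tau l S0 : 0 < eps -> 2 * eps ^ 2 < 1 -> eps ^ 2 / 2 < S0 ->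
  ln (1 + S0) / (2 * l) <= tau -> 0 < l ->
  let k := 6 / eps ^ 4 in
  tau < k * tau /\ eps ^ 2 / 2 + k * tau / (k * tau - tau) * exp (- (2 * l) * (k * tau - tau)) <= eps ^ 2.
Proof.
  intros He H2 HS Ht0 Hl k.
  set (c := eps ^ 2 / 2) in *.
  assert (Hep : 0 < eps ^ 2) by nra.
  assert (Hc : 0 < c) by (unfold c; lra).
  assert (Htp : 0 < tau).
  { apply Rlt_le_trans with (2 := Ht0). apply Rmult_lt_0_compat; [|apply Rinv_0_lt_compat; lra].
    rewrite <- ln_1. apply ln_increasing; lra. }
  assert (He4 : eps ^ 4 = eps ^ 2 * eps ^ 2) by ring.
  assert (Hk : 1 < k) by (unfold k; apply Rmult_lt_reg_r with (eps ^ 4); [nra|]; unfold Rdiv; rewrite Rmult_assoc, Rinv_l by nra; nra).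
  assert (Hts : tau < k * tau) by nra.
  split; auto.
  assert (E2 : k * tau / (k * tau - tau) = k / (k - 1)) by (field; split; lra).
  rewrite E2.
  assert (Hkk : k / (k - 1) <= 2).
  { apply Rmult_le_reg_r with (k - 1). lra. unfold Rdiv. rewrite Rmult_assoc, Rinv_l by lra.
    assert (k >= 2). { unfold k. apply Rle_ge. apply Rmult_le_reg_r with (eps ^ 4); [nra|]. unfold Rdiv. rewrite Rmult_assoc, Rinv_l by nra. nra. }
    lra. }
  set (y := 2 * l * (k * tau - tau)).
  assert (Hy1 : ln (1 + c) * (k - 1) <= y).
  { unfold y. replace (2 * l * (k * tau - tau)) with ((2 * l * tau) * (k - 1)) by ring.
    apply Rmult_le_compat_r; [lra|].
    assert (ln (1 + c) <= ln (1 + S0)) by (apply ln_le; lra).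
    assert (ln (1 + S0) <= 2 * l * tau).
    { apply Rmult_le_reg_r with (/ (2 * l)). apply Rinv_0_lt_compat; lra.
      replace (2 * l * tau * / (2 * l)) with tau by (field; lra). exact Ht0. }
    lra. }
  assert (Hlnc := ln_lower c ltac:(lra)).
  assert (Hc1 : c / (1 + c) >= 2 / 5 * eps ^ 2).
  { apply Rle_ge. apply Rmult_le_reg_r with (1 + c). lra.
    replace (c / (1 + c) * (1 + c)) with c by (field; lra). unfold c. nra. }
  set (x := / eps ^ 2).
  assert (Hx : x * eps ^ 2 = 1) by (unfold x; field; lra).
  assert (Hx2 : 2 <= x). { apply Rmult_le_reg_r with (eps ^ 2); auto. rewrite Hx. lra. }
  assert (Hy : 23 / 10 * x <= y).
  { apply Rle_trans with (2 := Hy1). apply Rle_trans with (c / (1 + c) * (k - 1)); [|apply Rmult_le_compat_r; lra].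
    apply Rle_trans with (2 / 5 * eps ^ 2 * (k - 1)); [|apply Rmult_le_compat_r; lra].
    assert (Hkx : k - 1 >= 23 / 4 * x * x).
    { apply Rle_ge. apply Rmult_le_reg_r with (eps ^ 4). nra.
      replace (23 / 4 * x * x * eps ^ 4) with (23 / 4 * (x * eps ^ 2) * (x * eps ^ 2)) by ring.
      rewrite Hx. rewrite Rmult_minus_distr_r. replace (k * eps ^ 4) with 6 by (unfold k; field; nra). nra. }
    assert (2 / 5 * eps ^ 2 * (23 / 4 * x * x) = 23 / 10 * x).
    { transitivity (23/10 * x * (x * eps ^ 2)). field. rewrite Hx. ring. }
    nra. }
  assert (Hexpy : 4 * x <= exp y).
  { assert (E : exp y = exp (y / 2) * exp (y / 2)) by (rewrite <- exp_plus; f_equal; field).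
    assert (H3 := exp_ineq1_le (y / 2)).
    assert (0 <= 1 + y / 2) by lra.
    assert ((1 + y / 2) * (1 + y / 2) <= exp (y / 2) * exp (y / 2)) by (apply Rmult_le_compat; lra).
    nra. }
  replace (- (2 * l) * (k * tau - tau)) with (- y) by (unfold y; ring).
  rewrite exp_Ropp.
  assert (0 < exp y) by apply exp_pos.
  assert (/ exp y <= eps ^ 2 / 4).
  { apply Rmult_le_reg_r with (exp y); auto. rewrite Rinv_l by lra.
    apply Rle_trans with (eps ^ 2 / 4 * (4 * x)). right. unfold Rdiv. rewrite <- Hx. field.
    apply Rmult_le_compat_l; lra. }
  assert (0 <= k / (k - 1)) by (apply Rdiv_le_0_compat; lra).
  assert (k / (k - 1) * / exp y <= 2 * (eps ^ 2 / 4)).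
  { apply Rmult_le_compat; auto. left; apply Rinv_0_lt_compat; auto. }
  unfold c. lra.
Qed.

Lemma bound_mono tau u t1 t2 : 0 <= u -> tau < t1 -> t1 <= t2 -> 0 <= tau ->
  t2 / (t2 - tau) * exp (- u * (t2 - tau)) <= t1 / (t1 - tau) * exp (- u * (t1 - tau)).
Proof.
  intros Hu H1 H2 Ht.
  apply Rmult_le_compat.
  - apply Rdiv_le_0_compat; lra.
  - left; apply exp_pos.
  - apply Rmult_le_reg_r with ((t2 - tau) * (t1 - tau)). nra.
    replace (t2 / (t2 - tau) * ((t2 - tau) * (t1 - tau))) with (t2 * (t1 - tau)) by (field; lra).
    replace (t1 / (t1 - tau) * ((t2 - tau) * (t1 - tau))) with (t1 * (t2 - tau)) by (field; lra). nra.
  - apply exp_le. nra.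
Qed.

Lemma nat_ceil t : 0 <= t -> exists m : nat, t <= INR m /\ INR m <= t + 1.
Proof.
  intros Ht. destruct (archimed t) as [H1 H2].
  assert (Hz : (0 <= up t)%Z) by (apply le_IZR; simpl; lra).
  exists (Z.to_nat (up t)). rewrite INR_IZR_INZ, Z2Nat.id by auto. split; lra.
Qed.

Lemma rsum_abs n f : Rabs (rsum n f) <= rsum n (fun i => Rabs (f i)).
Proof. induction n; simpl. rewrite Rabs_R0; lra. eapply Rle_trans. apply Rabs_triang. lra. Qed.

Lemma argmax n (f : nat -> R) : (1 <= n)%nat -> exists x0, (x0 < n)%nat /\ forall x, (x < n)%nat -> Rabs (f x) <= Rabs (f x0).
Proof.
  induction n; intros Hn; [lia|].
  destruct (Nat.eq_dec n 0) as [->|Hn0].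
  - exists 0%nat. split; [lia|]. intros x Hx. replace x with 0%nat by lia. lra.
  - destruct (IHn ltac:(lia)) as [x0 [Hx0 Hm]].
    destruct (Rle_dec (Rabs (f n)) (Rabs (f x0))).
    + exists x0. split; [lia|]. intros x Hx. destruct (Nat.eq_dec x n); [subst; auto| apply Hm; lia].
    + exists n. split; [lia|]. intros x Hx. destruct (Nat.eq_dec x n); [subst; lra|]. specialize (Hm x ltac:(lia)). lra.
Qed.

Lemma beta_le1 n K pi (phi : nat -> nat -> R) (beta : nat -> R) i : is_stochastic n K -> (forall x, (x < n)%nat -> 0 < pi x) ->
  (forall x, (x < n)%nat -> rsum n (fun y => K x y * phi i y) = beta i * phi i x) ->
  rsum n (fun x => phi i x * phi i x * pi x) = 1 -> Rabs (beta i) <= 1.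
Proof.
  intros [HK0 HK1] Hpi Hev Hn1.
  assert (Hn : (1 <= n)%nat) by (destruct n; [simpl in Hn1; lra| lia]).
  destruct (argmax n (phi i) Hn) as [x0 [Hx0 Hm]].
  assert (Hpos : 0 < Rabs (phi i x0)).
  { destruct (Req_dec (phi i x0) 0) as [E|E]; [|apply Rabs_pos_lt; auto].
    exfalso. rewrite (rsum_ext _ _ (fun _ => 0)) in Hn1. rewrite rsum_const in Hn1. lra.
    intros x Hx. specialize (Hm x Hx). rewrite E, Rabs_R0 in Hm.
    assert (phi i x = 0) by (destruct (Req_dec (phi i x) 0) as [E2|E2]; auto; pose proof (Rabs_pos_lt _ E2); lra).
    rewrite H; ring. }
  assert (H1 : Rabs (beta i) * Rabs (phi i x0) <= Rabs (phi i x0)).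
  { rewrite <- Rabs_mult, <- Hev by auto. eapply Rle_trans. apply rsum_abs.
    apply Rle_trans with (rsum n (fun y => K x0 y * Rabs (phi i x0))).
    - apply rsum_le. intros y Hy. rewrite Rabs_mult. rewrite (Rabs_right (K x0 y)) by (apply Rle_ge; apply HK0; auto).
      apply Rmult_le_compat_l. apply HK0; auto. apply Hm; auto.
    - rewrite rsum_scal_r, HK1 by auto. lra. }
  nra.
Qed.

Lemma T2d_le d e m : d m <= e -> exists k, T2d d e = Fin (INR k) /\ (k <= m)%nat.
Proof.
  intros H. destruct (T2d_spec d e) as [[k [E [Hk Hmin]]]|[E Hall]].
  - exists k. split; auto.
  - specialize (Hall m). lra.
Qed.

Lemma al_props c A x : 0 <= c -> 0 < A ->
  0 <= coefE A (ersqrt x) /\ sqrt c <= epsargE c A (ersqrt x).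
Proof.
  intros Hc HA. destruct x as [r|]; simpl.
  - assert (0 <= sqrt r) by apply sqrt_pos. split. apply Rdiv_le_0_compat; lra.
    apply sqrt_le_1_alt. assert (0 < A * exp (sqrt r * A)) by (apply Rmult_lt_0_compat; auto; apply exp_pos).
    assert (0 <= (A + sqrt r) / (A * exp (sqrt r * A))) by (apply Rdiv_le_0_compat; lra). lra.
  - split; lra.
Qed.

Lemma ERle_PInf x : ERle x PInf.
Proof. destruct x; simpl; auto. Qed.

Section Disc.
Variables (n : nat) (K : nat -> nat -> R) (pi mu beta : nat -> R) (phi : nat -> nat -> R).
Hypothesis Hpi : is_pos_prob n pi.
Hypothesis Hmu : is_prob n mu.
Hypothesis Hsto : is_stochastic n K.
Hypothesis Heig : eigen_d n K pi beta phi.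

Let w i := muphi n mu phi (S i) ^ 2.
Let N := (n - 1)%nat.
Hypothesis Hn : (1 <= N)%nat.

Lemma d_pipos : forall x, (x < n)%nat -> 0 < pi x.
Proof. apply Hpi. Qed.
Lemma d_orth : forall i k, (i < n)%nat -> (k < n)%nat ->
     rsum n (fun x => phi i x * phi k x * pi x) = if Nat.eqb i k then 1 else 0.
Proof. apply Heig. Qed.

Lemma d_V : pisq n pi (fun x => mu x / pi x) - 1 = Ssum n mu phi N /\
            pisq n pi (fun x => mu x / pi x - 1) = Ssum n mu phi N.
Proof.
  destruct Hpi as [_ Hps]. destruct Hmu as [_ Hms]. destruct Heig as [_ [_ [_ [Hp0 _]]]].
  assert (H2 := pisq_mu n pi phi d_pipos d_orth mu Hms Hp0 ltac:(unfold N in *; lia)).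
  rewrite (pisq_mu2 n pi d_pipos mu Hms Hps). auto.
Qed.

Lemma d_wpos : forall i, (i < N)%nat -> 0 <= w i.
Proof. intros; unfold w; apply pow2_ge_0. Qed.

Lemma d_Babs : forall j, (1 <= j <= N)%nat -> Rabs (beta j) <= 1.
Proof.
  intros j Hj. destruct Heig as [Hev _].
  apply (beta_le1 n K pi phi beta j Hsto d_pipos).
  - intros x Hx. apply Hev; auto. unfold N in *; lia.
  - rewrite d_orth by (unfold N in *; lia). rewrite Nat.eqb_refl. auto.
Qed.

Lemma d_Bmono : forall j, (1 <= j)%nat -> (S j <= N)%nat -> Rabs (beta (S j)) <= Rabs (beta j).
Proof. intros j H1 H2. destruct Heig as [_ [_ [_ [_ Hm]]]]. apply Hm; unfold N in *; lia. Qed.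

Lemma d2d_form : d2_disc n K pi mu = fun m => sqrt (Dd N w beta m).
Proof.
  apply functional_extensionality. intros m.
  destruct Heig as [Hev [_ [Hb0 [Hp0 _]]]]. destruct Hmu as [_ Hms].
  unfold d2_disc, l2norm. f_equal.
  change (rsum n (fun y => (rsum n (fun x => mu x * matpow n K m x y) / pi y - 1) ^ 2 * pi y))
    with (pisq n pi (fun y => rsum n (fun x => mu x * matpow n K m x y) / pi y - 1)).
  rewrite (dist_spec n pi phi d_pipos d_orth mu Hms Hp0 ltac:(unfold N in *; lia)
      (fun i => beta i ^ m) (matpow n K m)).
  - unfold Dd. apply rsum_ext. intros i Hi. unfold w. ring.
  - rewrite Hb0. apply pow1.
  - intros x y Hx Hy. apply (matpow_spec n pi phi d_pipos d_orth K beta); auto.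
Qed.

Lemma d_T2le e m : 0 < e -> Dd N w beta m <= e ^ 2 ->
  exists k, T2d (d2_disc n K pi mu) e = Fin (INR k) /\ (k <= m)%nat.
Proof.
  intros He H. apply T2d_le. rewrite d2d_form. apply sqrt_le_iff; auto. apply Dd_nn. apply d_wpos.
Qed.

Lemma d_tau_term c tau : 0 < c -> c < Ssum n mu phi N -> tau_d n mu phi beta c = Fin tau ->
  forall j, (jidx n mu phi c <= j <= N)%nat ->
  ERle (erterm (ln (1 + rsum j w)) (lam_d beta j)) (Fin tau).
Proof.
  intros Hc HcV E j Hj. rewrite <- E. unfold tau_d.
  destruct (jidx_spec n mu phi c Hc HcV) as [Hj0 _].
  apply (ermaxr_ge (fun j => erterm (ln (1 + Ssum n mu phi j)) (lam_d beta j))). unfold N in *; lia.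
Qed.

Lemma disc_upper c e : 0 < c -> c < Ssum n mu phi N -> 0 < e -> e ^ 2 <= c / (1 + c) ->
  ERle (tau_d n mu phi beta c) (T2d (d2_disc n K pi mu) e).
Proof.
  intros Hc HcV He Hec.
  destruct (T2d_spec (d2_disc n K pi mu) e) as [[m [E [Hm _]]]|[E _]]; rewrite E; [|apply ERle_PInf].
  rewrite d2d_form in Hm. apply sqrt_le_iff in Hm; [|apply Dd_nn; apply d_wpos| auto].
  destruct (jidx_spec n mu phi c Hc HcV) as [Hj0 [Hj0c _]].
  unfold tau_d. apply ermaxr_le. intros j Hj.
  apply (dA N w beta d_wpos d_Bmono c m j Hc). unfold N in *; lia.
  apply Rlt_le_trans with (Ssum n mu phi (jidx n mu phi c)); auto. apply Ssum_mono; lia.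
  lra.
Qed.

Lemma disc_part1 c A : 0 < c -> c < pisq n pi (fun x => mu x / pi x) - 1 -> 0 < A ->
        let al := alpha_d n mu phi beta c in
        ERle (ermul (Fin (coefE A al))
                    (eradd (T2d (d2_disc n K pi mu) (epsargE c A al)) (-1)))
             (tau_d n mu phi beta c)
        /\ ERle (tau_d n mu phi beta c) (T2d (d2_disc n K pi mu) (sqrt (c / (1 + c)))).
Proof.
  intros Hc HcV HA al. destruct d_V as [V1 _]. rewrite V1 in HcV.
  split.
  2:{ apply disc_upper; auto. apply sqrt_lt_R0; apply Rdiv_lt_0_compat; lra.
      rewrite <- Rsqr_pow2, Rsqr_sqrt. lra. left; apply Rdiv_lt_0_compat; lra. }
  destruct (jidx_spec n mu phi c Hc HcV) as [Hj0 [Hj0c Hj0p]].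
  set (j0 := jidx n mu phi c) in *.
  destruct (tau_d n mu phi beta c) as [tau|] eqn:Etau; [|apply ERle_PInf].
  assert (Hterm := d_tau_term c tau Hc HcV Etau). fold j0 in Hterm.
  destruct (al_props c A (ermul (tau_d n mu phi beta c) (lam_d beta j0)) ltac:(lra) HA) as [Hco Hea].
  fold j0 in Hco, Hea.
  change (ersqrt (ermul (tau_d n mu phi beta c) (lam_d beta j0))) with al in Hco, Hea.
  destruct (Req_EM_T (beta j0) 0) as [Hb|Hb].
  - assert (HD := dB0 N w beta d_wpos d_Babs d_Bmono j0 c 1 ltac:(unfold N in *; lia) Hj0p Hb ltac:(lia)).
    assert (Hep : 0 < epsargE c A al) by (apply Rlt_le_trans with (sqrt c); auto; apply sqrt_lt_R0; auto).
    destruct (d_T2le (epsargE c A al) 1 Hep) as [k [Ek Hk]].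
    { apply Rle_trans with c; auto. apply sqrt_le_iff in Hea; auto. lra. }
    rewrite Ek. simpl.
    assert (Ht0 : 0 <= tau).
    { specialize (Hterm j0 ltac:(unfold N in *; lia)). unfold lam_d in Hterm.
      destruct (Req_EM_T (beta j0) 0); [|contradiction]. simpl in Hterm. auto. }
    assert (INR k <= 1) by (apply le_INR in Hk; simpl in Hk; auto).
    nra.
  - destruct (dB1 N w beta d_wpos d_Babs d_Bmono j0 c tau ltac:(unfold N in *; lia) Hj0p Hc Hj0c Hb Hterm)
      as [Hl [Hrt [Htp Hbound]]].
    set (l0 := - ln (Rabs (beta j0))) in *.
    assert (Hlam : lam_d beta j0 = Fin l0).
    { unfold lam_d. destruct (Req_EM_T (beta j0) 0); [contradiction|auto]. }
    assert (Hal : al = Fin (sqrt (tau * l0))).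
    { unfold al, alpha_d. fold j0. rewrite Etau, Hlam. reflexivity. }
    destruct (alpha_calc tau l0 A Htp Hl HA) as [Halp [Hts Hcalc]].
    set (a := sqrt (tau * l0)) in *. set (ts := tau * (a + A) / a) in *.
    rewrite Hal. simpl.
    destruct (nat_ceil ts ltac:(lra)) as [m [Hm1 Hm2]].
    assert (HD := Hbound m ltac:(lra)).
    assert (Hmono := bound_mono tau (2 * l0) ts (INR m) ltac:(lra) Hts Hm1 ltac:(lra)).
    set (e := sqrt (c + (A + a) / (A * exp (a * A)))).
    assert (Hq : 0 < (A + a) / (A * exp (a * A))).
    { apply Rdiv_lt_0_compat. lra. apply Rmult_lt_0_compat; auto; apply exp_pos. }
    assert (He : 0 < e) by (apply sqrt_lt_R0; lra).
    assert (He2 : e ^ 2 = c + (A + a) / (A * exp (a * A))) by (unfold e; rewrite <- Rsqr_pow2; apply Rsqr_sqrt; lra).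
    destruct (d_T2le e m He) as [k [Ek Hk]].
    { rewrite He2. replace (- (2 * l0) * (INR m - tau)) with (- (2 * l0) * (INR m - tau)) in HD by ring.
      unfold l0 in *. lra. }
    fold e. rewrite Ek. simpl.
    assert (INR k <= INR m) by (apply le_INR; auto).
    assert (Hcoef : 0 <= a / (a + A)) by (apply Rdiv_le_0_compat; lra).
    apply Rle_trans with (a / (a + A) * ts).
    + apply Rmult_le_compat_l; auto. lra.
    + unfold ts. right. field. lra.
Qed.

Lemma disc_part2 eps : 0 < eps ->
        eps < sqrt (Rmin (pisq n pi (fun x => mu x / pi x - 1)) 1 / 2) ->
        ERle (tau_d n mu phi beta (2 * eps ^ 2)) (T2d (d2_disc n K pi mu) eps)
        /\ ERle (T2d (d2_disc n K pi mu) eps)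
                (eradd (ermul (Fin (6 / eps ^ 4)) (tau_d n mu phi beta (eps ^ 2 / 2))) 1).
Proof.
  intros He Hlt. destruct d_V as [_ V2]. rewrite V2 in Hlt.
  apply lt_sqrt_sq in Hlt; auto.
  assert (H1 : 2 * eps ^ 2 < Ssum n mu phi N) by (assert (H := Rmin_l (Ssum n mu phi N) 1); lra).
  assert (H2 : 2 * eps ^ 2 < 1) by (assert (H := Rmin_r (Ssum n mu phi N) 1); lra).
  assert (Hep : 0 < eps ^ 2) by nra.
  split.
  - apply disc_upper; auto. lra.
    apply Rmult_le_reg_r with (1 + 2 * eps ^ 2). lra.
    unfold Rdiv. rewrite Rmult_assoc, Rinv_l by lra. nra.
  - set (c := eps ^ 2 / 2).
    assert (Hc : 0 < c) by (unfold c; lra). assert (HcV : c < Ssum n mu phi N) by (unfold c; lra).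
    assert (Hk0 : 6 / eps ^ 4 <> 0) by (apply Rgt_not_eq; apply Rdiv_lt_0_compat; [lra| nra]).
    destruct (tau_d n mu phi beta c) as [tau|] eqn:Etau.
    2:{ cbn [ermul eradd]. destruct (Req_EM_T (6 / eps ^ 4) 0); [contradiction|]. apply ERle_PInf. }
    destruct (jidx_spec n mu phi c Hc HcV) as [Hj0 [Hj0c Hj0p]].
    set (j0 := jidx n mu phi c) in *.
    assert (Hterm := d_tau_term c tau Hc HcV Etau). fold j0 in Hterm.
    cbn [ermul eradd].
    destruct (Req_EM_T (beta j0) 0) as [Hb|Hb].
    + assert (HD := dB0 N w beta d_wpos d_Babs d_Bmono j0 c 1 ltac:(unfold N in *; lia) Hj0p Hb ltac:(lia)).
      destruct (d_T2le eps 1 He) as [k [Ek Hk]]. unfold c in HD; lra.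
      rewrite Ek. cbn [ERle].
      assert (Ht0 : 0 <= tau).
      { specialize (Hterm j0 ltac:(unfold N in *; lia)). unfold lam_d in Hterm.
        destruct (Req_EM_T (beta j0) 0); [|contradiction]. simpl in Hterm. auto. }
      assert (INR k <= 1) by (apply le_INR in Hk; simpl in Hk; auto).
      assert (0 <= 6 / eps ^ 4 * tau) by (apply Rmult_le_pos; auto; apply Rdiv_le_0_compat; [lra|nra]).
      lra.
    + destruct (dB1 N w beta d_wpos d_Babs d_Bmono j0 c tau ltac:(unfold N in *; lia) Hj0p Hc Hj0c Hb Hterm)
        as [Hl [Hrt [Htp Hbound]]].
      set (l0 := - ln (Rabs (beta j0))) in *.
      destruct (eps_calc eps tau l0 (rsum j0 w) He H2 Hj0c Hrt Hl) as [Hts Hcalc].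
      set (k := 6 / eps ^ 4) in *.
      destruct (nat_ceil (k * tau) ltac:(lra)) as [m [Hm1 Hm2]].
      assert (HD := Hbound m ltac:(lra)).
      assert (Hmono := bound_mono tau (2 * l0) (k * tau) (INR m) ltac:(lra) Hts Hm1 ltac:(lra)).
      destruct (d_T2le eps m He) as [kk [Ek Hk]].
      { unfold c in HD. unfold l0 in *. lra. }
      rewrite Ek. cbn [ERle].
      assert (INR kk <= INR m) by (apply le_INR; auto).
      lra.
Qed.
End Disc.

Lemma degen n pi mu : (n < 2)%nat -> is_prob n mu -> is_pos_prob n pi ->
  pisq n pi (fun x => mu x / pi x) - 1 = 0 /\ pisq n pi (fun x => mu x / pi x - 1) = 0.
Proof.
  intros Hn [_ Hm] [Hp Hps].
  destruct n as [|[|n']]; [simpl in Hm; lra| |lia].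
  simpl in *. assert (mu 0%nat = 1) by lra. assert (pi 0%nat = 1) by lra.
  unfold pisq; simpl. rewrite H, H0. split; field.
Qed.

Theorem proposition3p4 :
  (forall (n : nat) (L : nat -> nat -> R) (pi mu : nat -> R)
          (lam : nat -> R) (phi : nat -> nat -> R),
     is_generator n L -> irreducible n L -> is_pos_prob n pi -> reversible n pi L ->
     is_prob n mu -> eigen_c n L pi lam phi ->
     (forall c A : R,
        0 < c -> c < pisq n pi (fun x => mu x / pi x) - 1 -> 0 < A ->
        let al := alpha_c n mu phi lam c in
        al / (al + A) *
          T2c (d2_cont n L pi mu) (sqrt (c + (A + al) / (A * exp (al * A))))
          <= tau_c n mu phi lam c
        /\ tau_c n mu phi lam c <= T2c (d2_cont n L pi mu) (sqrt (c / (1 + c)))) /\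
     (forall eps : R,
        0 < eps ->
        eps < sqrt (Rmin (pisq n pi (fun x => mu x / pi x - 1)) 1 / 2) ->
        tau_c n mu phi lam (2 * eps ^ 2) <= T2c (d2_cont n L pi mu) eps
        /\ T2c (d2_cont n L pi mu) eps <= 6 / eps ^ 4 * tau_c n mu phi lam (eps ^ 2 / 2)))
  /\
  (forall (n : nat) (K : nat -> nat -> R) (pi mu : nat -> R)
          (beta : nat -> R) (phi : nat -> nat -> R),
     is_stochastic n K -> irreducible n K -> is_pos_prob n pi -> reversible n pi K ->
     is_prob n mu -> eigen_d n K pi beta phi ->
     (forall c A : R,
        0 < c -> c < pisq n pi (fun x => mu x / pi x) - 1 -> 0 < A ->
        let al := alpha_d n mu phi beta c in
        ERle (ermul (Fin (coefE A al))
                    (eradd (T2d (d2_disc n K pi mu) (epsargE c A al)) (-1)))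
             (tau_d n mu phi beta c)
        /\ ERle (tau_d n mu phi beta c) (T2d (d2_disc n K pi mu) (sqrt (c / (1 + c))))) /\
     (forall eps : R,
        0 < eps ->
        eps < sqrt (Rmin (pisq n pi (fun x => mu x / pi x - 1)) 1 / 2) ->
        ERle (tau_d n mu phi beta (2 * eps ^ 2)) (T2d (d2_disc n K pi mu) eps)
        /\ ERle (T2d (d2_disc n K pi mu) eps)
                (eradd (ermul (Fin (6 / eps ^ 4)) (tau_d n mu phi beta (eps ^ 2 / 2))) 1))).
Proof.
  split.
  - intros n L pi mu lam phi _ _ Hpi _ Hmu Heig.
    destruct (Nat.lt_ge_cases n 2) as [Hn|Hn].
    + destruct (degen n pi mu Hn Hmu Hpi) as [D1 D2]. split.
      * intros c A Hc Hlt. lra.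
      * intros eps He Hlt. rewrite D2 in Hlt. rewrite Rmin_left in Hlt by lra.
        replace (0 / 2) with 0 in Hlt by field. rewrite sqrt_0 in Hlt. lra.
    + split.
      * intros c A. apply (cont_part1 n L pi mu lam phi Hpi Hmu Heig ltac:(lia)).
      * intros eps. apply (cont_part2 n L pi mu lam phi Hpi Hmu Heig ltac:(lia)).
  - intros n K pi mu beta phi HK _ Hpi _ Hmu Heig.
    destruct (Nat.lt_ge_cases n 2) as [Hn|Hn].
    + destruct (degen n pi mu Hn Hmu Hpi) as [D1 D2]. split.
      * intros c A Hc Hlt. lra.
      * intros eps He Hlt. rewrite D2 in Hlt. rewrite Rmin_left in Hlt by lra.
        replace (0 / 2) with 0 in Hlt by field. rewrite sqrt_0 in Hlt. lra.
    + split.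
      * intros c A. apply (disc_part1 n K pi mu beta phi Hpi Hmu HK Heig ltac:(lia)).
      * intros eps. apply (disc_part2 n K pi mu beta phi Hpi Hmu HK Heig ltac:(lia)).
Qed.
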